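(* Let $p\in\mathbb C[z,w]$ be a polynomial with $Z(p)\cap Z(z)\cap\partial\mathbb D^2=\emptyset$, and let $\mathcal M=[p,f_1,\dots,f_n]$ be the submodule of $H^2(\mathbb D^2)$ generated by $p$ and some $f_1,\dots,f_n\in H^2(\mathbb D^2)$. Set $Q=\mathcal M\ominus[p]$ and $T_{z,Q}=P_QM_z|_Q$. Then $\ker T_{z,Q}^*$ is finite dimensional.
   Context: $H^2(\mathbb D^2)$ is the Hardy space of the bidisc, a Hilbert module over $\mathbb C[z,w]$ via multiplication. A submodule is a closed subspace invariant under multiplication by polynomials; $[g_1,\dots,g_m]$ denotes the smallest submodule containing $g_1,\dots,g_m$. $Z(p)$ is the zero set of $p$ in $\mathbb C^2$ and $Z(z)=\{(z,w)\in\mathbb C^2:z=0\}$. *)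

(* Defs.v *)
From Stdlib Require Import Reals.
From Coquelicot Require Import Coquelicot.
Open Scope R_scope.

(** Elements of H^2(D^2) are identified with their Taylor coefficient arrays
    f : nat -> nat -> C  (f i j = coefficient of z^i w^j), square summable. *)
Definition coefs := nat -> nat -> C.

Fixpoint csum (u : nat -> C) (N : nat) : C :=
  match N with O => RtoC 0 | S N' => Cplus (csum u N') (u N') end.

Fixpoint rsum (u : nat -> R) (N : nat) : R :=
  match N with O => 0 | S N' => rsum u N' + u N' end.

Definition psum2 (f : coefs) (N : nat) : R :=
  rsum (fun i => rsum (fun j => (Cmod (f i j))^2) N) N.

Definition in_H2 (f : coefs) : Prop := exists M : R, forall N, psum2 f N <= M.

Definition csub (f g : coefs) : coefs := fun i j => Cminus (f i j) (g i j).

Definition pinner (f g : coefs) (N : nat) : C :=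
  csum (fun i => csum (fun j => Cmult (f i j) (Cconj (g i j))) N) N.

Definition orth (f g : coefs) : Prop :=
  is_lim_seq (fun N => Re (pinner f g N)) 0 /\
  is_lim_seq (fun N => Im (pinner f g N)) 0.

Record poly2 := Poly2 {
  pcoef : nat -> nat -> C;
  pdeg : nat;
  pcoef_supp : forall i j, (pdeg < i)%nat \/ (pdeg < j)%nat -> pcoef i j = RtoC 0
}.

Fixpoint cpow (a : C) (n : nat) : C :=
  match n with O => RtoC 1 | S n' => Cmult a (cpow a n') end.

Definition peval (p : poly2) (a b : C) : C :=
  csum (fun i => csum (fun j =>
      Cmult (pcoef p i j) (Cmult (cpow a i) (cpow b j))) (S (pdeg p))) (S (pdeg p)).

(** multiplication of an H^2 function by a polynomial (Cauchy product of coefficients) *)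
Definition mulp (q : poly2) (g : coefs) : coefs := fun i j =>
  csum (fun k => csum (fun l => Cmult (pcoef q k l) (g (i - k)%nat (j - l)%nat)) (S j)) (S i).

Definition mulz (g : coefs) : coefs := fun i j =>
  match i with O => RtoC 0 | S i' => g i' j end.

Definition pcombo (m : nat) (qs : nat -> poly2) (gs : nat -> coefs) : coefs :=
  fun i j => csum (fun k => mulp (qs k) (gs k) i j) m.

(** [g_0, ..., g_{m-1}] : the smallest submodule (closed, C[z,w]-invariant) containing
    the g_k, i.e. the H^2-norm closure of { sum_k q_k g_k : q_k in C[z,w] }. *)
Definition in_gen (m : nat) (gs : nat -> coefs) (f : coefs) : Prop :=
  in_H2 f /\
  forall eps : R, 0 < eps ->
    exists qs : nat -> poly2, forall N, psum2 (csub f (pcombo m qs gs)) N <= eps.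

Definition in_bdry_bidisc (a b : C) : Prop :=
  Cmod a <= 1 /\ Cmod b <= 1 /\ (Cmod a = 1 \/ Cmod b = 1).

Definition lincomb (d : nat) (cs : nat -> C) (vs : nat -> coefs) : coefs :=
  fun i j => csum (fun k => Cmult (cs k) (vs k i j)) d.

(* Main.v *)
Require Import Defs.
From Stdlib Require Import Reals Lra Lia Psatz Classical ClassicalEpsilon FunctionalExtensionality.
From Coquelicot Require Import Coquelicot.
Open Scope R_scope.

Ltac cdes := repeat match goal with | z : C |- _ => destruct z end.
Ltac ceq := cdes; unfold Cplus, Cmult, Cminus, Copp, Cconj, RtoC, Re, Im in *; simpl in *;
  try (apply injective_projections; simpl; ring).

Lemma Cmod2 (z : C) : Cmod z ^ 2 = fst z ^ 2 + snd z ^ 2.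
Proof. unfold Cmod. rewrite pow2_sqrt; [lra|nra]. Qed.

Lemma rsum_ext_lt u v N : (forall k, (k < N)%nat -> u k = v k) -> rsum u N = rsum v N.
Proof. induction N; simpl; intros H; auto. rewrite IHN, H; auto. Qed.
Lemma csum_ext_lt u v N : (forall k, (k < N)%nat -> u k = v k) -> csum u N = csum v N.
Proof. induction N; simpl; intros H; auto. rewrite IHN, H; auto. Qed.
Lemma rsum_plus u v N : rsum (fun k => u k + v k) N = rsum u N + rsum v N.
Proof. induction N; simpl; [lra|]. rewrite IHN; lra. Qed.
Lemma rsum_scal a u N : rsum (fun k => a * u k) N = a * rsum u N.
Proof. induction N; simpl; [lra|]. rewrite IHN; lra. Qed.
Lemma rsum_zero N : rsum (fun _ => 0) N = 0.
Proof. induction N; simpl; [lra|]. rewrite IHN; lra. Qed.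
Lemma rsum_le u v N : (forall k, (k < N)%nat -> u k <= v k) -> rsum u N <= rsum v N.
Proof. induction N; simpl; intros H; [lra|]. pose proof (H N ltac:(lia)).
  assert (rsum u N <= rsum v N) by (apply IHN; auto). lra. Qed.
Lemma rsum_nonneg u N : (forall k, 0 <= u k) -> 0 <= rsum u N.
Proof. intros H. induction N; simpl; [lra|]. pose proof (H N); lra. Qed.
Lemma rsum_extend u N N' : (N <= N')%nat -> (forall k, (N <= k < N')%nat -> u k = 0) ->
  rsum u N' = rsum u N.
Proof. intros Hle. induction Hle; intros H; auto. simpl. rewrite IHHle, H; [lra|lia|].
  intros; apply H; lia. Qed.
Lemma rsum_mono u N N' : (N <= N')%nat -> (forall k, 0 <= u k) -> rsum u N <= rsum u N'.
Proof. intros Hle H. induction Hle; [lra|]. simpl. pose proof (H m); lra. Qed.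
Lemma rsum_S u N : rsum u (S N) = rsum u N + u N.
Proof. reflexivity. Qed.
Lemma csum_S u N : csum u (S N) = Cplus (csum u N) (u N).
Proof. reflexivity. Qed.
Lemma rsum_shift a u N :
  rsum (fun i => if (a <=? i)%nat then u (i - a)%nat else 0) N = rsum u (N - a).
Proof. induction N; [reflexivity|]. rewrite rsum_S, IHN. destruct (Nat.leb_spec a N) as [E|E].
  - replace (S N - a)%nat with (S (N - a)) by lia. rewrite rsum_S. auto.
  - replace (S N - a)%nat with 0%nat by lia.
    replace (N - a)%nat with 0%nat by lia. simpl; lra. Qed.

Lemma csum_plus u v N : csum (fun k => Cplus (u k) (v k)) N = Cplus (csum u N) (csum v N).
Proof. induction N; simpl. - ceq; lra. - rewrite IHN. ceq. Qed.
Lemma csum_scal a u N : csum (fun k => Cmult a (u k)) N = Cmult a (csum u N).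
Proof. induction N; simpl. - ceq. - rewrite IHN. ceq. Qed.
Lemma csum_zero N : csum (fun _ => RtoC 0) N = RtoC 0.
Proof. induction N; simpl; auto. rewrite IHN. ceq. Qed.
Lemma csum_zero' u N : (forall k, (k < N)%nat -> u k = RtoC 0) -> csum u N = RtoC 0.
Proof. intros H. rewrite (csum_ext_lt u (fun _ => RtoC 0)); auto. apply csum_zero. Qed.
Lemma Re_csum u N : Re (csum u N) = rsum (fun k => Re (u k)) N.
Proof. induction N; simpl; auto. rewrite <- IHN. reflexivity. Qed.
Lemma Im_csum u N : Im (csum u N) = rsum (fun k => Im (u k)) N.
Proof. induction N; simpl; auto. rewrite <- IHN. reflexivity. Qed.
Lemma Cconj_csum u N : Cconj (csum u N) = csum (fun k => Cconj (u k)) N.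
Proof. induction N; simpl. - ceq. - rewrite <- IHN. ceq. Qed.
Lemma csum_extend u N N' : (N <= N')%nat -> (forall k, (N <= k < N')%nat -> u k = RtoC 0) ->
  csum u N' = csum u N.
Proof. intros Hle. induction Hle; intros H; auto. simpl. rewrite IHHle, H; [|lia|].
  - ceq. - intros; apply H; lia. Qed.
Lemma csum_first u N : csum u (S N) = Cplus (u 0%nat) (csum (fun k => u (S k)) N).
Proof. induction N.
  - simpl. ceq.
  - change (csum u (S (S N))) with (Cplus (csum u (S N)) (u (S N))). rewrite IHN. simpl. ceq. Qed.
Lemma csum_single u N a : (a < N)%nat -> (forall k, (k < N)%nat -> k <> a -> u k = RtoC 0) ->
  csum u N = u a.
Proof. induction N; intros Ha H; [lia|]. simpl. destruct (Nat.eq_dec a N).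
  - subst. rewrite csum_zero'. + ceq. + intros; apply H; lia.
  - rewrite IHN by (auto; lia). rewrite (H N) by lia. ceq. Qed.
Lemma csum_rev u N : csum u N = csum (fun k => u (N - 1 - k)%nat) N.
Proof. induction N; auto. rewrite (csum_first (fun k => u (S N - 1 - k)%nat)). rewrite csum_S, IHN.
  replace (S N - 1 - 0)%nat with N by lia.
  rewrite (csum_ext_lt (fun k => u (S N - 1 - S k)%nat) (fun k => u (N - 1 - k)%nat)).
  - ceq. - intros; f_equal; lia. Qed.
Lemma rsum_zero' u N : (forall k, (k < N)%nat -> u k = 0) -> rsum u N = 0.
Proof. intros H. rewrite (rsum_ext_lt u (fun _ => 0)); auto. apply rsum_zero. Qed.
Lemma Cmod0sq : Cmod (RtoC 0) ^ 2 = 0.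
Proof. rewrite Cmod2; simpl; ring. Qed.
Ltac cfield := cdes; unfold Cplus, Cmult, Cminus, Copp, Cconj, RtoC, Re, Im in *; simpl in *;
  apply injective_projections; simpl; field.


Definition cadd (f g : coefs) : coefs := fun i j => Cplus (f i j) (g i j).
Definition cscal (c : C) (f : coefs) : coefs := fun i j => Cmult c (f i j).
Definition czero : coefs := fun _ _ => RtoC 0.
Definition rsum2 (u : nat -> nat -> R) N := rsum (fun i => rsum (fun j => u i j) N) N.

Lemma psum2_eq f N : psum2 f N = rsum2 (fun i j => Cmod (f i j) ^ 2) N.
Proof. reflexivity. Qed.

Lemma rsum2_le u v N : (forall i j, (i < N)%nat -> (j < N)%nat -> u i j <= v i j) -> rsum2 u N <= rsum2 v N.
Proof. intros H. apply rsum_le; intros. apply rsum_le; intros; auto. Qed.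
Lemma rsum2_plus u v N : rsum2 (fun i j => u i j + v i j) N = rsum2 u N + rsum2 v N.
Proof. unfold rsum2. rewrite <- rsum_plus. apply rsum_ext_lt; intros. apply rsum_plus. Qed.
Lemma rsum2_scal a u N : rsum2 (fun i j => a * u i j) N = a * rsum2 u N.
Proof. unfold rsum2. rewrite <- rsum_scal. apply rsum_ext_lt; intros. apply rsum_scal. Qed.
Lemma rsum2_nonneg u N : (forall i j, 0 <= u i j) -> 0 <= rsum2 u N.
Proof. intros H. apply rsum_nonneg; intros. apply rsum_nonneg; auto. Qed.
Lemma rsum2_mono u N N' : (N <= N')%nat -> (forall i j, 0 <= u i j) -> rsum2 u N <= rsum2 u N'.
Proof. intros Hl H. unfold rsum2. apply Rle_trans with (rsum (fun i => rsum (fun j => u i j) N') N).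
  - apply rsum_le; intros. apply rsum_mono; auto.
  - apply rsum_mono; auto. intros; apply rsum_nonneg; auto. Qed.
Lemma rsum_swap (u : nat -> nat -> R) N K :
  rsum (fun i => rsum (fun k => u i k) K) N = rsum (fun k => rsum (fun i => u i k) N) K.
Proof. induction N; simpl. - rewrite rsum_zero; auto. - rewrite IHN, <- rsum_plus. auto. Qed.

Lemma Cmod2_nonneg z : 0 <= Cmod z ^ 2.
Proof. rewrite Cmod2. pose proof (pow2_ge_0 (fst z)); pose proof (pow2_ge_0 (snd z)); lra. Qed.
Lemma psum2_nonneg f N : 0 <= psum2 f N.
Proof. apply rsum2_nonneg; intros; apply Cmod2_nonneg. Qed.
Lemma psum2_mono f N N' : (N <= N')%nat -> psum2 f N <= psum2 f N'.
Proof. intros; apply rsum2_mono; auto; intros; apply Cmod2_nonneg. Qed.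

Lemma Cmod2_add_le a b : Cmod (Cplus a b) ^ 2 <= 2 * Cmod a ^ 2 + 2 * Cmod b ^ 2.
Proof. rewrite !Cmod2. destruct a, b; simpl. pose proof (pow2_ge_0 (r-r1)). pose proof (pow2_ge_0 (r0-r2)). nra. Qed.
Lemma Cmod2_sub_le a b : Cmod (Cminus a b) ^ 2 <= 2 * Cmod a ^ 2 + 2 * Cmod b ^ 2.
Proof. rewrite !Cmod2. destruct a, b; simpl. pose proof (pow2_ge_0 (r+r1)). pose proof (pow2_ge_0 (r0+r2)). nra. Qed.
Lemma Cmod2_mult a b : Cmod (Cmult a b) ^ 2 = Cmod a ^ 2 * Cmod b ^ 2.
Proof. rewrite !Cmod2. destruct a, b; simpl. ring. Qed.

Lemma psum2_add_le f g N : psum2 (cadd f g) N <= 2 * psum2 f N + 2 * psum2 g N.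
Proof. rewrite !psum2_eq, <- !rsum2_scal, <- rsum2_plus. apply rsum2_le; intros. apply Cmod2_add_le. Qed.
Lemma psum2_sub_le f g N : psum2 (csub f g) N <= 2 * psum2 f N + 2 * psum2 g N.
Proof. rewrite !psum2_eq, <- !rsum2_scal, <- rsum2_plus. apply rsum2_le; intros. apply Cmod2_sub_le. Qed.
Lemma psum2_scal c f N : psum2 (cscal c f) N = Cmod c ^ 2 * psum2 f N.
Proof. rewrite !psum2_eq, <- rsum2_scal. unfold rsum2. apply rsum_ext_lt; intros; apply rsum_ext_lt; intros.
  unfold cscal. apply Cmod2_mult. Qed.

Lemma H2_add f g : in_H2 f -> in_H2 g -> in_H2 (cadd f g).
Proof. intros [A HA] [B HB]. exists (2*A+2*B). intros N. pose proof (psum2_add_le f g N).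
  pose proof (HA N); pose proof (HB N); lra. Qed.
Lemma H2_sub f g : in_H2 f -> in_H2 g -> in_H2 (csub f g).
Proof. intros [A HA] [B HB]. exists (2*A+2*B). intros N. pose proof (psum2_sub_le f g N).
  pose proof (HA N); pose proof (HB N); lra. Qed.
Lemma H2_scal c f : in_H2 f -> in_H2 (cscal c f).
Proof. intros [A HA]. exists (Cmod c ^2 * A). intros N. rewrite psum2_scal.
  apply Rmult_le_compat_l; auto. apply Cmod2_nonneg. Qed.
Lemma psum2_zero N : psum2 czero N = 0.
Proof. rewrite psum2_eq. unfold rsum2. rewrite <- (rsum_zero N). apply rsum_ext_lt; intros.
  rewrite <- (rsum_zero N). apply rsum_ext_lt; intros. unfold czero. rewrite Cmod2. simpl; ring. Qed.
Lemma H2_zero : in_H2 czero.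
Proof. exists 0. intros; rewrite psum2_zero; lra. Qed.
Lemma psum2_ext f g N : (forall i j, f i j = g i j) -> psum2 f N = psum2 g N.
Proof. intros H. unfold psum2. apply rsum_ext_lt; intros; apply rsum_ext_lt; intros; rewrite H; auto. Qed.

Definition fsum (K : nat) (F : nat -> coefs) : coefs := fun i j => csum (fun k => F k i j) K.

Lemma Cmod2_csum_le z K : Cmod (csum z K) ^ 2 <= INR K * rsum (fun k => Cmod (z k) ^ 2) K.
Proof. induction K.
  - rewrite Cmod2. simpl. lra.
  - rewrite csum_S, rsum_S, S_INR. set (A := csum z K) in *. set (S := rsum (fun k => Cmod (z k) ^ 2) K) in *.
    pose proof (Cmod2_nonneg (z K)). assert (0 <= S) by (apply rsum_nonneg; intros; apply Cmod2_nonneg).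
    pose proof (pos_INR K).
    rewrite Cmod2. rewrite Cmod2 in IHK. rewrite Cmod2 in H. rewrite Cmod2.
    destruct A as [a1 a2], (z K) as [b1 b2]; simpl in *.
    destruct (Req_dec (INR K) 0) as [E|E].
    + rewrite E in *. assert (a1 = 0) by nra. assert (a2 = 0) by nra. subst. nra.
    + assert (0 < INR K) by lra. set (k := INR K) in *.
      assert (k * ((a1+b1)^2 + (a2+b2)^2) <= (k+1) * (a1^2+a2^2) + k*(k+1)*(b1^2+b2^2)).
      { pose proof (pow2_ge_0 (a1 - k*b1)); pose proof (pow2_ge_0 (a2 - k*b2)). nra. }
      apply Rmult_le_reg_l with k; auto.
      assert ((k+1) * (a1^2+a2^2) <= (k+1) * (k * S)) by (apply Rmult_le_compat_l; lra). nra. Qed.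

Lemma psum2_fsum_le K F N : psum2 (fsum K F) N <= INR K * rsum (fun k => psum2 (F k) N) K.
Proof. rewrite psum2_eq. apply Rle_trans with (rsum2 (fun i j => INR K * rsum (fun k => Cmod (F k i j) ^ 2) K) N).
  - apply rsum2_le; intros. apply Cmod2_csum_le.
  - rewrite rsum2_scal. apply Req_le. f_equal. unfold rsum2.
    transitivity (rsum (fun i => rsum (fun k => rsum (fun j => Cmod (F k i j) ^ 2) N) K) N).
    + apply rsum_ext_lt; intros i _. apply (rsum_swap (fun j k => Cmod (F k i j) ^ 2)).
    + rewrite (rsum_swap (fun i k => rsum (fun j => Cmod (F k i j) ^ 2) N)). reflexivity. Qed.

Lemma H2_fsum K F : (forall k, (k < K)%nat -> in_H2 (F k)) -> in_H2 (fsum K F).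
Proof. intros H. assert (exists B, forall k, (k < K)%nat -> forall N, psum2 (F k) N <= B) as [B HB].
  { clear -H. induction K. - exists 0; intros; lia.
    - destruct IHK as [B HB]. { intros; apply H; lia. } destruct (H K ltac:(lia)) as [B' HB'].
      exists (Rmax B B'). intros k Hk N. destruct (Nat.eq_dec k K). + subst. pose proof (HB' N). pose proof (Rmax_r B B'); lra.
      + pose proof (HB k ltac:(lia) N). pose proof (Rmax_l B B'); lra. }
  exists (INR K * (INR K * B)). intros N. eapply Rle_trans; [apply psum2_fsum_le|].
  apply Rmult_le_compat_l; [apply pos_INR|].
  replace (INR K * B) with (rsum (fun _ => B) K).
  - apply rsum_le; intros; auto.
  - clear. induction K. simpl; lra. rewrite rsum_S, IHK, S_INR. lra. Qed.

Definition sh (a b : nat) (g : coefs) : coefs := fun i j =>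
  if (a <=? i)%nat then (if (b <=? j)%nat then g (i - a)%nat (j - b)%nat else RtoC 0) else RtoC 0.

Lemma psum2_sh_le a b g N : psum2 (sh a b g) N <= psum2 g N.
Proof. rewrite !psum2_eq. unfold rsum2, sh.
  transitivity (rsum (fun i => if (a <=? i)%nat then rsum (fun j => Cmod (g (i - a)%nat j) ^ 2) (N - b) else 0) N).
  - apply Req_le. apply rsum_ext_lt; intros i _. destruct (a <=? i)%nat.
    + rewrite <- rsum_shift. apply rsum_ext_lt; intros j _. destruct (b <=? j)%nat; auto. apply Cmod0sq.
    + apply rsum_zero'; intros. apply Cmod0sq.
  - rewrite (rsum_shift a (fun i' => rsum (fun j => Cmod (g i' j) ^ 2) (N - b))). eapply Rle_trans. apply rsum_le. intros. apply rsum_mono with (N' := N). lia.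
    intros; apply Cmod2_nonneg. apply rsum_mono. lia. intros; apply rsum_nonneg; intros; apply Cmod2_nonneg. Qed.
Lemma H2_sh a b g : in_H2 g -> in_H2 (sh a b g).
Proof. intros [B HB]; exists B; intros N. pose proof (psum2_sh_le a b g N); pose proof (HB N); lra. Qed.

Lemma mulz_sh g : mulz g = sh 1 0 g.
Proof. apply functional_extensionality; intros i; apply functional_extensionality; intros j.
  unfold mulz, sh. destruct i; simpl; auto. rewrite !Nat.sub_0_r. auto. Qed.
Lemma sh_sh a b c d g : sh a b (sh c d g) = sh (a + c) (b + d) g.
Proof. apply functional_extensionality; intros i; apply functional_extensionality; intros j.
  unfold sh. destruct (Nat.leb_spec a i), (Nat.leb_spec b j), (Nat.leb_spec (a+c) i), (Nat.leb_spec (b+d) j),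
    (Nat.leb_spec c (i-a)), (Nat.leb_spec d (j-b)); auto; try lia. f_equal; lia. Qed.
Lemma H2_mulz g : in_H2 g -> in_H2 (mulz g).
Proof. rewrite mulz_sh. apply H2_sh. Qed.

Lemma H2_fin f D : (forall i j, (D < i)%nat \/ (D < j)%nat -> f i j = RtoC 0) -> in_H2 f.
Proof. intros H. exists (psum2 f (S D)). intros N. destruct (Nat.le_ge_cases N (S D)).
  - apply psum2_mono; auto.
  - apply Req_le. rewrite !psum2_eq. unfold rsum2.
    rewrite (rsum_extend _ (S D) N); auto.
    + apply rsum_ext_lt; intros. apply rsum_extend; auto. intros. rewrite H by lia. apply Cmod0sq.
    + intros. apply rsum_zero'; intros. rewrite H by lia. apply Cmod0sq. Qed.


Lemma lim_uniq u (a b : R) : is_lim_seq u a -> is_lim_seq u b -> a = b.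
Proof. intros Ha Hb. apply is_lim_seq_unique in Ha. apply is_lim_seq_unique in Hb.
  assert (E : Finite a = Finite b) by congruence. inversion E; reflexivity. Qed.
Lemma lim_le u v (a b : R) : (forall n, u n <= v n) -> is_lim_seq u a -> is_lim_seq v b -> a <= b.
Proof. intros H Ha Hb. exact (is_lim_seq_le u v a b H Ha Hb). Qed.
Lemma lim_le_const u (a B : R) : (forall n, u n <= B) -> is_lim_seq u a -> a <= B.
Proof. intros H Ha. apply (lim_le u (fun _ => B)); auto. apply is_lim_seq_const. Qed.

Lemma lim_scal_r u (a l : R) : is_lim_seq u l -> is_lim_seq (fun n => u n * a) (l * a).
Proof. intros H. apply is_lim_seq_mult'; auto. apply is_lim_seq_const. Qed.
Lemma lim_scal_l u (a l : R) : is_lim_seq u l -> is_lim_seq (fun n => a * u n) (a * l).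
Proof. intros H. apply is_lim_seq_mult'; auto. apply is_lim_seq_const. Qed.

Definition nrm2 (f : coefs) : R := real (Lim_seq (psum2 f)).

Lemma nrm2_lim f : in_H2 f -> is_lim_seq (psum2 f) (nrm2 f).
Proof. intros [B HB]. unfold nrm2. apply Lim_seq_correct'.
  apply ex_finite_lim_seq_incr with B; auto. intros; apply psum2_mono; lia. Qed.
Lemma psum2_le_nrm2 f N : in_H2 f -> psum2 f N <= nrm2 f.
Proof. intros H. apply is_lim_seq_incr_compare; [apply nrm2_lim; auto|]. intros; apply psum2_mono; lia. Qed.
Lemma nrm2_le f B : (forall N, psum2 f N <= B) -> nrm2 f <= B.
Proof. intros H. apply lim_le_const with (psum2 f); auto. apply nrm2_lim. exists B; auto. Qed.
Lemma nrm2_nonneg f : in_H2 f -> 0 <= nrm2 f.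
Proof. intros H. pose proof (psum2_le_nrm2 f 0 H). pose proof (psum2_nonneg f 0). lra. Qed.
Lemma nrm2_ext f g : (forall i j, f i j = g i j) -> nrm2 f = nrm2 g.
Proof. intros H. unfold nrm2. f_equal. apply Lim_seq_ext. intros; apply psum2_ext; auto. Qed.

Definition clim (u : nat -> C) (l : C) := is_lim_seq (fun N => Re (u N)) (Re l) /\ is_lim_seq (fun N => Im (u N)) (Im l).
Lemma clim_uniq u a b : clim u a -> clim u b -> a = b.
Proof. intros [H1 H2] [H3 H4]. destruct a, b. unfold Re, Im in *; simpl in *. f_equal; eapply lim_uniq; eauto. Qed.
Lemma clim_ext u v l : (forall n, u n = v n) -> clim u l -> clim v l.
Proof. intros H [H1 H2]; split; [apply (is_lim_seq_ext (fun N => Re (u N))) | apply (is_lim_seq_ext (fun N => Im (u N)))];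
  auto; intros; rewrite H; auto. Qed.
Lemma clim_plus u v a b : clim u a -> clim v b -> clim (fun n => Cplus (u n) (v n)) (Cplus a b).
Proof. intros [H1 H2] [H3 H4]; split.
  - apply (is_lim_seq_plus' _ _ _ _ H1 H3). - apply (is_lim_seq_plus' _ _ _ _ H2 H4). Qed.
Lemma clim_scal c u a : clim u a -> clim (fun n => Cmult c (u n)) (Cmult c a).
Proof. intros [H1 H2]; split; unfold Re, Im in *; simpl.
  - apply is_lim_seq_minus'; apply lim_scal_l; auto.
  - apply is_lim_seq_plus'; apply lim_scal_l; auto. Qed.
Lemma clim_conj u a : clim u a -> clim (fun n => Cconj (u n)) (Cconj a).
Proof. intros [H1 H2]; split; auto. unfold Im, Cconj; simpl. apply is_lim_seq_opp in H2. simpl in H2. auto. Qed.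

Definition csum2 (u : nat -> nat -> C) N := csum (fun i => csum (fun j => u i j) N) N.
Lemma pinner_eq f g N : pinner f g N = csum2 (fun i j => Cmult (f i j) (Cconj (g i j))) N.
Proof. reflexivity. Qed.
Lemma csum2_ext u v N : (forall i j, u i j = v i j) -> csum2 u N = csum2 v N.
Proof. intros H; unfold csum2; apply csum_ext_lt; intros; apply csum_ext_lt; intros; auto. Qed.
Lemma csum2_plus u v N : csum2 (fun i j => Cplus (u i j) (v i j)) N = Cplus (csum2 u N) (csum2 v N).
Proof. unfold csum2. rewrite <- csum_plus. apply csum_ext_lt; intros. apply csum_plus. Qed.
Lemma csum2_scal a u N : csum2 (fun i j => Cmult a (u i j)) N = Cmult a (csum2 u N).
Proof. unfold csum2. rewrite <- csum_scal. apply csum_ext_lt; intros. apply csum_scal. Qed.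
Lemma csum2_conj u N : Cconj (csum2 u N) = csum2 (fun i j => Cconj (u i j)) N.
Proof. unfold csum2. rewrite Cconj_csum. apply csum_ext_lt; intros. apply Cconj_csum. Qed.
Lemma Re_csum2 u N : Re (csum2 u N) = rsum2 (fun i j => Re (u i j)) N.
Proof. unfold csum2, rsum2. rewrite Re_csum. apply rsum_ext_lt; intros. apply Re_csum. Qed.
Lemma Im_csum2 u N : Im (csum2 u N) = rsum2 (fun i j => Im (u i j)) N.
Proof. unfold csum2, rsum2. rewrite Im_csum. apply rsum_ext_lt; intros. apply Im_csum. Qed.
Lemma rsum2_ext u v N : (forall i j, u i j = v i j) -> rsum2 u N = rsum2 v N.
Proof. intros H; unfold rsum2; apply rsum_ext_lt; intros; apply rsum_ext_lt; intros; auto. Qed.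
Lemma rsum2_lin a b u v N : a * rsum2 u N + b * rsum2 v N = rsum2 (fun i j => a * u i j + b * v i j) N.
Proof. rewrite rsum2_plus, !rsum2_scal. auto. Qed.

Lemma rsum2_combo3 u v w (a b : R) N : rsum2 u N - a * rsum2 v N + b * rsum2 w N = rsum2 (fun i j => u i j - a * v i j + b * w i j) N.
Proof. rewrite (rsum2_ext (fun i j => u i j - a * v i j + b * w i j) (fun i j => (u i j + (-a) * v i j) + b * w i j)) by (intros; ring).
  rewrite rsum2_plus, rsum2_scal, rsum2_plus, rsum2_scal. ring. Qed.

Definition Ci : C := (0, 1).
Definition ip (f g : coefs) : C :=
  ((nrm2 (cadd f g) - nrm2 (csub f g)) / 4,
   (nrm2 (cadd f (cscal Ci g)) - nrm2 (csub f (cscal Ci g))) / 4).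

Lemma Re_pinner f g N : Re (pinner f g N) = (psum2 (cadd f g) N - psum2 (csub f g) N) / 4.
Proof. rewrite pinner_eq, Re_csum2, !psum2_eq.
  replace ((rsum2 (fun i j => Cmod (cadd f g i j) ^ 2) N - rsum2 (fun i j => Cmod (csub f g i j) ^ 2) N) / 4)
    with (/4 * rsum2 (fun i j => Cmod (cadd f g i j) ^ 2) N + (-/4) * rsum2 (fun i j => Cmod (csub f g i j) ^ 2) N) by (field).
  rewrite rsum2_lin. apply rsum2_ext; intros. rewrite !Cmod2. unfold cadd, csub. ceq. field. Qed.
Lemma Im_pinner f g N : Im (pinner f g N) = (psum2 (cadd f (cscal Ci g)) N - psum2 (csub f (cscal Ci g)) N) / 4.
Proof. rewrite pinner_eq, Im_csum2, !psum2_eq.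
  match goal with |- _ = (?A - ?B)/4 => replace ((A - B)/4) with (/4 * A + (-/4) * B) by field end.
  rewrite rsum2_lin. apply rsum2_ext; intros. rewrite !Cmod2. unfold cadd, csub, cscal, Ci. ceq. field. Qed.

Lemma H2_Ci g : in_H2 g -> in_H2 (cscal Ci g).
Proof. apply H2_scal. Qed.

Lemma pinner_lim f g : in_H2 f -> in_H2 g -> clim (pinner f g) (ip f g).
Proof. intros Hf Hg. split; unfold ip, Re, Im; simpl.
  - eapply is_lim_seq_ext. { intros; symmetry; apply Re_pinner. }
    unfold Rdiv. apply lim_scal_r. apply is_lim_seq_minus'; apply nrm2_lim.
    apply H2_add; auto. apply H2_sub; auto.
  - eapply is_lim_seq_ext. { intros; symmetry; apply Im_pinner. }
    unfold Rdiv. apply lim_scal_r. apply is_lim_seq_minus'; apply nrm2_lim.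
    apply H2_add; auto using H2_Ci. apply H2_sub; auto using H2_Ci. Qed.

Lemma orth_ip f g : in_H2 f -> in_H2 g -> (orth f g <-> ip f g = RtoC 0).
Proof. intros Hf Hg. pose proof (pinner_lim f g Hf Hg) as [H1 H2]. split.
  - intros [H3 H4]. apply injective_projections; simpl.
    + eapply lim_uniq; eauto. + eapply lim_uniq; eauto.
  - intros E. rewrite E in H1, H2. split; auto. Qed.

Lemma ip_clim f g a : in_H2 f -> in_H2 g -> clim (pinner f g) a -> ip f g = a.
Proof. intros; eapply clim_uniq; eauto using pinner_lim. Qed.

Lemma ip_add_l f g h : in_H2 f -> in_H2 g -> in_H2 h -> ip (cadd f g) h = Cplus (ip f h) (ip g h).
Proof. intros. apply ip_clim; auto using H2_add. eapply clim_ext; [|apply clim_plus; apply pinner_lim; eauto].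
  intros N. rewrite !pinner_eq, <- csum2_plus. apply csum2_ext; intros. unfold cadd. ceq. Qed.
Lemma ip_scal_l c f h : in_H2 f -> in_H2 h -> ip (cscal c f) h = Cmult c (ip f h).
Proof. intros. apply ip_clim; auto using H2_scal. eapply clim_ext; [|apply clim_scal; apply pinner_lim; eauto].
  intros N. rewrite !pinner_eq, <- csum2_scal. apply csum2_ext; intros. unfold cscal. ceq. Qed.
Lemma ip_sub_l f g h : in_H2 f -> in_H2 g -> in_H2 h -> ip (csub f g) h = Cminus (ip f h) (ip g h).
Proof. intros. replace (Cminus (ip f h) (ip g h)) with (Cplus (ip f h) (Cmult (RtoC (-1)) (ip g h))) by ceq.
  apply ip_clim; auto using H2_sub.
  eapply clim_ext; [|apply clim_plus; [apply pinner_lim; eauto|apply (clim_scal (RtoC (-1))); apply pinner_lim; eauto]].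
  intros N. rewrite !pinner_eq, <- csum2_scal, <- csum2_plus. apply csum2_ext; intros. unfold csub. ceq. Qed.
Lemma ip_conj f g : in_H2 f -> in_H2 g -> ip g f = Cconj (ip f g).
Proof. intros. apply ip_clim; auto. eapply clim_ext; [|apply clim_conj; apply pinner_lim; eauto].
  intros N. rewrite !pinner_eq, csum2_conj. apply csum2_ext; intros. ceq. Qed.
Lemma ip_self f : in_H2 f -> ip f f = RtoC (nrm2 f).
Proof. intros. apply ip_clim; auto. split; unfold Re, Im, RtoC; simpl.
  - eapply is_lim_seq_ext; [|apply nrm2_lim; auto]. intros N. change (psum2 f N = Re (pinner f f N)).
    rewrite pinner_eq, Re_csum2, psum2_eq. apply rsum2_ext; intros. rewrite Cmod2. ceq. ring.
  - eapply is_lim_seq_ext; [|apply is_lim_seq_const]. intros N. change (0 = Im (pinner f f N)).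
    rewrite pinner_eq, Im_csum2. unfold rsum2. symmetry. apply rsum_zero'; intros. apply rsum_zero'; intros. ceq. ring. Qed.
Lemma ip_zero_l h : in_H2 h -> ip czero h = RtoC 0.
Proof. intros. apply ip_clim; auto using H2_zero. split; unfold Re, Im, RtoC; simpl;
  (eapply is_lim_seq_ext; [|apply is_lim_seq_const]); intros N; rewrite pinner_eq;
  [rewrite Re_csum2|rewrite Im_csum2]; unfold rsum2; symmetry; apply rsum_zero'; intros; apply rsum_zero'; intros; unfold czero; ceq; ring. Qed.

Lemma nrm2_expand a v t : in_H2 a -> in_H2 v ->
  nrm2 (csub a (cscal t v)) = nrm2 a - 2 * Re (Cmult (Cconj t) (ip a v)) + Cmod t ^ 2 * nrm2 v.
Proof. intros Ha Hv. eapply lim_uniq. apply nrm2_lim. apply H2_sub; auto using H2_scal.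
  eapply is_lim_seq_ext with (u := fun N => psum2 a N - 2 * Re (Cmult (Cconj t) (pinner a v N)) + Cmod t ^ 2 * psum2 v N).
  - intros N. rewrite pinner_eq, <- csum2_scal, Re_csum2, !psum2_eq.
    rewrite rsum2_combo3. apply rsum2_ext; intros. rewrite !Cmod2. unfold csub, cscal. ceq. ring.
  - apply is_lim_seq_plus'. apply is_lim_seq_minus'. apply nrm2_lim; auto.
    + apply lim_scal_l. exact (proj1 (clim_scal (Cconj t) _ _ (pinner_lim a v Ha Hv))).
    + apply lim_scal_l. apply nrm2_lim; auto.
Qed.

Lemma nrm2_parallel a b : in_H2 a -> in_H2 b ->
  nrm2 (cadd a b) + nrm2 (csub a b) = 2 * nrm2 a + 2 * nrm2 b.
Proof. intros Ha Hb. eapply lim_uniq.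
  - apply is_lim_seq_plus'; apply nrm2_lim; auto using H2_add, H2_sub.
  - eapply is_lim_seq_ext with (u := fun N => 2 * psum2 a N + 2 * psum2 b N).
    + intros N. rewrite !psum2_eq, <- !rsum2_scal, <- !rsum2_plus. apply rsum2_ext; intros.
      rewrite !Cmod2. unfold cadd, csub. ceq. ring.
    + apply is_lim_seq_plus'; apply lim_scal_l; apply nrm2_lim; auto. Qed.

Lemma nrm2_scal c f : in_H2 f -> nrm2 (cscal c f) = Cmod c ^ 2 * nrm2 f.
Proof. intros Hf. eapply lim_uniq. apply nrm2_lim; auto using H2_scal.
  eapply is_lim_seq_ext. { intros N. symmetry. apply psum2_scal. } apply lim_scal_l; apply nrm2_lim; auto. Qed.

Lemma rsum2_opp u N : rsum2 (fun i j => - u i j) N = - rsum2 u N.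
Proof. rewrite (rsum2_ext _ (fun i j => (-1) * u i j)) by (intros; ring). rewrite rsum2_scal; ring. Qed.

Lemma Re_pinner_bound f g t N : 0 < t ->
  Rabs (Re (pinner f g N)) <= (t * psum2 f N + psum2 g N / t) / 2.
Proof. intros Ht. rewrite pinner_eq, Re_csum2, !psum2_eq.
  replace ((t * rsum2 (fun i j => Cmod (f i j) ^ 2) N + rsum2 (fun i j => Cmod (g i j) ^ 2) N / t) / 2)
    with ((t/2) * rsum2 (fun i j => Cmod (f i j) ^ 2) N + (/(2*t)) * rsum2 (fun i j => Cmod (g i j) ^ 2) N) by (field; lra).
  rewrite rsum2_lin. apply Rabs_le. split.
  - rewrite <- rsum2_opp. apply rsum2_le; intros. rewrite !Cmod2. destruct (f i j) as [a1 a2], (g i j) as [b1 b2].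
    unfold Re, Cmult, Cconj; simpl.
    pose proof (pow2_ge_0 (t*a1 + b1)); pose proof (pow2_ge_0 (t*a2 + b2)).
    apply Rmult_le_reg_l with (2*t); [lra|]. field_simplify; [|lra]. nra.
  - apply rsum2_le; intros. rewrite !Cmod2. destruct (f i j) as [a1 a2], (g i j) as [b1 b2].
    unfold Re, Cmult, Cconj; simpl.
    pose proof (pow2_ge_0 (t*a1 - b1)); pose proof (pow2_ge_0 (t*a2 - b2)).
    apply Rmult_le_reg_l with (2*t); [lra|]. field_simplify; [|lra]. nra. Qed.

Lemma Im_pinner_Re f g N : Im (pinner f g N) = Re (pinner f (cscal Ci g) N).
Proof. rewrite !pinner_eq, Im_csum2, Re_csum2. apply rsum2_ext; intros. unfold cscal, Ci. ceq. ring. Qed.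
Lemma Im_pinner_bound f g t N : 0 < t ->
  Rabs (Im (pinner f g N)) <= (t * psum2 f N + psum2 g N / t) / 2.
Proof. intros Ht. rewrite Im_pinner_Re. replace (psum2 g N) with (psum2 (cscal Ci g) N).
  apply Re_pinner_bound; auto. rewrite psum2_scal. unfold Ci. rewrite Cmod2; simpl; ring. Qed.

Lemma lim_abs_bound u v (a b : R) : (forall n, Rabs (u n) <= v n) -> is_lim_seq u a -> is_lim_seq v b -> Rabs a <= b.
Proof. intros H Ha Hb. apply Rabs_le. split.
  - assert (- a <= b). { apply (lim_le (fun n => - u n) v); auto.
      - intros n. pose proof (H n). apply Rabs_le_between in H0. lra.
      - apply is_lim_seq_opp in Ha. auto. } lra.
  - apply (lim_le u v); auto. intros n. pose proof (H n). apply Rabs_le_between in H0. lra. Qed.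

Lemma ip_bound f g t : in_H2 f -> in_H2 g -> 0 < t ->
  Rabs (Re (ip f g)) <= (t * nrm2 f + nrm2 g / t) / 2 /\ Rabs (Im (ip f g)) <= (t * nrm2 f + nrm2 g / t) / 2.
Proof. intros Hf Hg Ht. destruct (pinner_lim f g Hf Hg) as [H1 H2].
  assert (HB : is_lim_seq (fun N => (t * psum2 f N + psum2 g N / t) / 2) ((t * nrm2 f + nrm2 g / t) / 2)).
  { unfold Rdiv. apply lim_scal_r. apply is_lim_seq_plus'. apply lim_scal_l; apply nrm2_lim; auto.
    apply lim_scal_r; apply nrm2_lim; auto. }
  split; eapply lim_abs_bound; eauto; intros; [apply Re_pinner_bound|apply Im_pinner_bound]; auto. Qed.

Lemma abs_small_zero r : (forall d, 0 < d -> Rabs r <= d) -> r = 0.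
Proof. intros H. destruct (Req_dec r 0); auto. pose proof (H (Rabs r / 2)). assert (0 < Rabs r) by (apply Rabs_pos_lt; auto).
  lra. Qed.

Lemma ip_approx y x : in_H2 y -> in_H2 x ->
  (forall eps, 0 < eps -> exists m, in_H2 m /\ ip m x = RtoC 0 /\ nrm2 (csub y m) <= eps) -> ip y x = RtoC 0.
Proof. intros Hy Hx H. pose proof (nrm2_nonneg x Hx).
  assert (forall d, 0 < d -> Rabs (Re (ip y x)) <= d /\ Rabs (Im (ip y x)) <= d).
  { intros d Hd. set (t := (nrm2 x + 1) / d). assert (Ht : 0 < t) by (unfold t; apply Rdiv_lt_0_compat; lra).
    destruct (H (d / t)) as [m [Hm [Hmx Hn]]]. { apply Rdiv_lt_0_compat; lra. }
    assert (E : ip y x = ip (csub y m) x). { rewrite ip_sub_l, Hmx; auto. ceq. }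
    rewrite E. destruct (ip_bound (csub y m) x t) as [B1 B2]; auto using H2_sub.
    assert ((t * nrm2 (csub y m) + nrm2 x / t) / 2 <= d).
    { assert (t * nrm2 (csub y m) <= d). { apply Rmult_le_compat_l with (r := t) in Hn; [|lra].
        replace (t * (d / t)) with d in Hn by (field; lra). auto. }
      assert (nrm2 x / t <= d). { unfold t. replace (nrm2 x / ((nrm2 x + 1) / d)) with (d * (nrm2 x / (nrm2 x + 1))) by (field; lra).
        rewrite <- (Rmult_1_r d) at 2. apply Rmult_le_compat_l; [lra|]. apply Rmult_le_reg_r with (nrm2 x + 1); [lra|].
        field_simplify; lra. }
      lra. }
    split; lra. }
  apply injective_projections; simpl; apply abs_small_zero; intros d Hd; apply H1; auto. Qed.

Lemma rsum_term_le u N k : (forall k, 0 <= u k) -> (k < N)%nat -> u k <= rsum u N.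
Proof. intros H Hk. induction N; [lia|]. rewrite rsum_S. destruct (Nat.eq_dec k N).
  - subst. pose proof (rsum_nonneg u N H). lra.
  - pose proof (H N). assert (u k <= rsum u N) by (apply IHN; lia). lra. Qed.

Lemma nrm2_zero_eq f : in_H2 f -> nrm2 f = 0 -> forall i j, f i j = RtoC 0.
Proof. intros Hf H0 i j. set (N := S (Nat.max i j)).
  assert (Cmod (f i j) ^ 2 <= psum2 f N).
  { rewrite psum2_eq. unfold rsum2. eapply Rle_trans; [|apply rsum_term_le with (k := i)].
    - apply rsum_term_le with (u := fun j => Cmod (f i j) ^ 2). intros; apply Cmod2_nonneg. unfold N; lia.
    - intros; apply rsum_nonneg; intros; apply Cmod2_nonneg.
    - unfold N; lia. }
  pose proof (psum2_le_nrm2 f N Hf). rewrite Cmod2 in H. destruct (f i j) as [a b]; simpl in *.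
  assert (a = 0) by nra. assert (b = 0) by nra. subst. reflexivity. Qed.


Lemma coef_le_psum2 f i j : Cmod (f i j) ^ 2 <= psum2 f (S (Nat.max i j)).
Proof. rewrite psum2_eq. unfold rsum2. eapply Rle_trans; [|apply rsum_term_le with (k := i)].
    - apply rsum_term_le with (u := fun j => Cmod (f i j) ^ 2). intros; apply Cmod2_nonneg. lia.
    - intros; apply rsum_nonneg; intros; apply Cmod2_nonneg.
    - lia. Qed.

Lemma rsum_lim (U : nat -> nat -> R) (w : nat -> R) N :
  (forall k, is_lim_seq (fun m => U m k) (w k)) -> is_lim_seq (fun m => rsum (U m) N) (rsum w N).
Proof. intros H. induction N; simpl. apply is_lim_seq_const. apply is_lim_seq_plus'; auto. Qed.
Lemma rsum2_lim (U : nat -> nat -> nat -> R) (w : nat -> nat -> R) N :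
  (forall i j, is_lim_seq (fun m => U m i j) (w i j)) -> is_lim_seq (fun m => rsum2 (U m) N) (rsum2 w N).
Proof. intros H. unfold rsum2. apply (rsum_lim (fun m i => rsum (fun j => U m i j) N)). intros i.
  apply (rsum_lim (fun m j => U m i j)). auto. Qed.

Lemma sq_small x e : 0 < e -> x ^ 2 <= e ^ 2 / 4 -> Rabs x < e.
Proof. intros He H. apply Rabs_def1; nra. Qed.

Lemma Cmod2_sub a b : Cmod (Cminus a b) ^ 2 = (fst a - fst b) ^ 2 + (snd a - snd b) ^ 2.
Proof. rewrite Cmod2. destruct a, b; simpl. ring. Qed.

Lemma complete (s : nat -> coefs) : (forall n, in_H2 (s n)) ->
  (forall eps, 0 < eps -> exists K, forall n m, (K <= n)%nat -> (K <= m)%nat -> nrm2 (csub (s n) (s m)) <= eps) ->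
  exists u, in_H2 u /\ forall eps, 0 < eps -> exists K, forall n, (K <= n)%nat -> nrm2 (csub u (s n)) <= eps.
Proof. intros Hs Hc.
  assert (Hco : forall i j, ex_finite_lim_seq (fun n => fst (s n i j)) /\ ex_finite_lim_seq (fun n => snd (s n i j))).
  { intros i j.
    assert (Hd : forall e, 0 < e -> exists K, forall n m, (K <= n)%nat -> (K <= m)%nat ->
       (fst (s n i j) - fst (s m i j)) ^ 2 + (snd (s n i j) - snd (s m i j)) ^ 2 <= e).
    { intros e He. destruct (Hc e He) as [K HK]. exists K. intros n m Hn Hm. rewrite <- Cmod2_sub.
      pose proof (HK n m Hn Hm) as H1. pose proof (coef_le_psum2 (csub (s n) (s m)) i j) as H2.
      pose proof (psum2_le_nrm2 (csub (s n) (s m)) (S (Nat.max i j)) (H2_sub _ _ (Hs n) (Hs m))) as H3.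
      change (Cmod (csub (s n) (s m) i j) ^ 2 <= e). lra. }
    split; apply ex_lim_seq_cauchy_corr; intros [e He]; simpl;
    assert (Hpos : 0 < e ^ 2 / 4) by (apply Rdiv_lt_0_compat; [apply pow_lt|]; lra);
    destruct (Hd _ Hpos) as [K HK]; exists K; intros n m Hn Hm;
    pose proof (HK n m Hn Hm) as H1; apply sq_small; auto.
    - pose proof (pow2_ge_0 (snd (s n i j) - snd (s m i j))). lra.
    - pose proof (pow2_ge_0 (fst (s n i j) - fst (s m i j))). lra. }
  set (u := fun i j => (real (Lim_seq (fun n => fst (s n i j))), real (Lim_seq (fun n => snd (s n i j))))).
  assert (Hu : forall i j, is_lim_seq (fun n => fst (s n i j)) (fst (u i j)) /\ is_lim_seq (fun n => snd (s n i j)) (snd (u i j))).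
  { intros i j. destruct (Hco i j). split; apply Lim_seq_correct'; auto. }
  assert (Hb : forall eps, 0 < eps -> exists K, forall n N, (K <= n)%nat -> psum2 (csub u (s n)) N <= eps).
  { intros eps He. destruct (Hc eps He) as [K HK]. exists K. intros n N Hn.
    assert (L : is_lim_seq (fun m => psum2 (csub (s (m + K)%nat) (s n)) N) (psum2 (csub u (s n)) N)).
    { rewrite psum2_eq. eapply is_lim_seq_ext. { intros m. rewrite psum2_eq. reflexivity. }
      apply (rsum2_lim (fun m i j => Cmod (csub (s (m + K)%nat) (s n) i j) ^ 2)). intros i j.
      change (is_lim_seq (fun m => Cmod (Cminus (s (m + K)%nat i j) (s n i j)) ^ 2) (Cmod (Cminus (u i j) (s n i j)) ^ 2)).
      rewrite Cmod2_sub. apply is_lim_seq_ext with (u := fun m => (fst (s (m + K)%nat i j) - fst (s n i j)) ^ 2 + (snd (s (m + K)%nat i j) - snd (s n i j)) ^ 2).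
      { intros m. rewrite Cmod2_sub. auto. }
      destruct (Hu i j) as [U1 U2]. apply is_lim_seq_incr_n with (N := K) in U1. apply is_lim_seq_incr_n with (N := K) in U2.
      apply is_lim_seq_plus'; simpl; apply is_lim_seq_mult'; try (apply is_lim_seq_mult'; [|apply is_lim_seq_const]);
      apply is_lim_seq_minus'; auto; apply is_lim_seq_const. }
    apply (lim_le_const (fun m => psum2 (csub (s (m + K)%nat) (s n)) N) _ eps); [|exact L]. intros m. eapply Rle_trans. apply psum2_le_nrm2. apply H2_sub; auto.
    apply HK; lia. }
  assert (HuH : in_H2 u).
  { destruct (Hb 1 ltac:(lra)) as [K HK]. destruct (Hs K) as [B HB]. exists (2 * 1 + 2 * B). intros N.
    pose proof (psum2_add_le (csub u (s K)) (s K) N). rewrite (psum2_ext (cadd (csub u (s K)) (s K)) u) in H.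
    - pose proof (HK K N (le_n K)). pose proof (HB N). lra.
    - intros; unfold cadd, csub. ceq. }
  exists u. split; auto. intros eps He. destruct (Hb eps He) as [K HK]. exists K. intros n Hn. apply nrm2_le. auto. Qed.

Lemma small_ip x : in_H2 x -> forall d, 0 < d -> exists eps, 0 < eps /\
  forall a, in_H2 a -> nrm2 a <= eps -> Rabs (Re (ip a x)) <= d /\ Rabs (Im (ip a x)) <= d.
Proof. intros Hx d Hd. pose proof (nrm2_nonneg x Hx). set (t := (nrm2 x + 1) / d).
  assert (Ht : 0 < t) by (unfold t; apply Rdiv_lt_0_compat; lra).
  exists (d / t). split. apply Rdiv_lt_0_compat; lra. intros a Ha Hn.
  destruct (ip_bound a x t) as [B1 B2]; auto.
  assert ((t * nrm2 a + nrm2 x / t) / 2 <= d).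
  { assert (t * nrm2 a <= d). { apply Rmult_le_compat_l with (r := t) in Hn; [|lra].
        replace (t * (d / t)) with d in Hn by (field; lra). auto. }
    assert (nrm2 x / t <= d). { unfold t. replace (nrm2 x / ((nrm2 x + 1) / d)) with (d * (nrm2 x / (nrm2 x + 1))) by (field; lra).
        rewrite <- (Rmult_1_r d) at 2. apply Rmult_le_compat_l; [lra|]. apply Rmult_le_reg_r with (nrm2 x + 1); [lra|].
        field_simplify; lra. }
    lra. }
  split; lra. Qed.

Lemma fun_ext2 (f g : coefs) : (forall i j, f i j = g i j) -> f = g.
Proof. intros H. apply functional_extensionality; intros i; apply functional_extensionality; intros j; auto. Qed.

Lemma inv_small eps : 0 < eps -> exists K : nat, forall n, (K <= n)%nat -> / (INR n + 1) <= eps.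
Proof. intros He. destruct (archimed_cor1 eps He) as [K [HK HK0]]. exists K. intros n Hn.
  assert (0 < INR K) by (apply lt_0_INR; lia). assert (INR K <= INR n) by (apply le_INR; lia).
  assert (/ (INR n + 1) <= / INR K) by (apply Rinv_le_contravar; lra). lra. Qed.

Lemma projection (V : coefs -> Prop)
  (HVH : forall v, V v -> in_H2 v) (HV0 : V czero)
  (HVlin : forall u v c, V u -> V v -> V (cadd u (cscal c v)))
  (HVcl : forall f, in_H2 f -> (forall eps, 0 < eps -> exists v, V v /\ nrm2 (csub f v) <= eps) -> V f)
  h (Hh : in_H2 h) : exists u, V u /\ forall v, V v -> ip (csub h u) v = RtoC 0.
Proof.
  set (E := fun r => exists v, V v /\ r = - nrm2 (csub h v)).
  assert (HB : bound E). { exists 0. intros r [v [Hv ->]]. pose proof (nrm2_nonneg (csub h v) (H2_sub _ _ Hh (HVH v Hv))). lra. }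
  assert (HE : exists x, E x). { exists (- nrm2 (csub h czero)). exists czero; auto. }
  destruct (completeness E HB HE) as [L [HL1 HL2]]. set (delta := - L).
  assert (Hlow : forall v, V v -> delta <= nrm2 (csub h v)).
  { intros v Hv. assert (- nrm2 (csub h v) <= L) by (apply HL1; exists v; auto). unfold delta; lra. }
  assert (Happ : forall eps, 0 < eps -> exists v, V v /\ nrm2 (csub h v) <= delta + eps).
  { intros eps He. apply NNPP. intros Hn. assert (L <= L - eps); [|lra]. apply HL2. intros r [v [Hv ->]].
    assert (~ nrm2 (csub h v) <= delta + eps) by (intros C; apply Hn; exists v; auto). unfold delta in *; lra. }
  assert (Hseq : forall n : nat, exists v, V v /\ nrm2 (csub h v) <= delta + / (INR n + 1)).
  { intros n. apply Happ. apply Rinv_0_lt_compat. pose proof (pos_INR n); lra. }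
  set (s := fun n => proj1_sig (constructive_indefinite_description _ (Hseq n))).
  assert (Hs : forall n, V (s n) /\ nrm2 (csub h (s n)) <= delta + / (INR n + 1)).
  { intros n. unfold s. destruct (constructive_indefinite_description _ (Hseq n)) as [v Hv]. simpl; auto. }
  assert (HsH : forall n, in_H2 (s n)) by (intros n; apply HVH, Hs).
  assert (Hcs : forall n m, nrm2 (csub (s n) (s m)) <= 2 * / (INR n + 1) + 2 * / (INR m + 1)).
  { intros n m. set (a := csub h (s m)). set (b := csub h (s n)).
    assert (Ha : in_H2 a) by (apply H2_sub; auto). assert (Hb : in_H2 b) by (apply H2_sub; auto).
    pose proof (nrm2_parallel a b Ha Hb) as P.
    set (w := cadd czero (cscal (/2) (cadd (s n) (cscal (RtoC 1) (s m))))).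
    assert (Hw : V w) by (apply HVlin; auto; apply HVlin; apply Hs).
    assert (E1 : nrm2 (cadd a b) = 4 * nrm2 (csub h w)).
    { rewrite (nrm2_ext (cadd a b) (cscal (RtoC 2) (csub h w))). rewrite nrm2_scal. unfold RtoC. rewrite Cmod2. simpl. ring.
      apply H2_sub; auto. intros i j. unfold a, b, w, cadd, csub, cscal, czero. cfield. }
    rewrite (nrm2_ext (csub a b) (csub (s n) (s m))) in P.
    2:{ intros i j. unfold a, b, csub. ceq. }
    pose proof (Hlow w Hw). pose proof (proj2 (Hs n)). pose proof (proj2 (Hs m)). fold b in H0. fold a in H1. lra. }
  destruct (complete s HsH) as [u [HuH Hconv]].
  { intros eps He. destruct (inv_small (eps / 4)) as [K HK]. lra. exists K. intros n m Hn Hm.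
    pose proof (Hcs n m). pose proof (HK n Hn). pose proof (HK m Hm). lra. }
  assert (HVu : V u).
  { apply HVcl; auto. intros eps He. destruct (Hconv eps He) as [K HK]. exists (s K). split. apply Hs. apply HK; lia. }
  exists u. split; auto. intros v Hv. pose proof (HVH v Hv) as HvH.
  remember (ip (csub h u) v) as c eqn:Hc.
  assert (Hhu : in_H2 (csub h u)) by (apply H2_sub; auto).
  assert (Key : forall n (sg : R), delta <= delta + / (INR n + 1)
      - 2 * (sg * (fst c ^ 2 + snd c ^ 2) + sg * (fst c * fst (ip (csub u (s n)) v) + snd c * snd (ip (csub u (s n)) v)))
      + sg ^ 2 * (fst c ^ 2 + snd c ^ 2) * nrm2 v).
  { intros n sg. set (t := (sg * fst c, sg * snd c)).
    assert (Hm : V (cadd (s n) (cscal t v))) by (apply HVlin; auto; apply Hs).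
    pose proof (Hlow _ Hm) as H1.
    rewrite (nrm2_ext _ (csub (csub h (s n)) (cscal t v))) in H1 by (intros; unfold cadd, csub, cscal; ceq).
    rewrite nrm2_expand in H1 by (auto; apply H2_sub; auto).
    rewrite (fun_ext2 (csub h (s n)) (cadd (csub h u) (csub u (s n)))) in H1 by (intros; unfold cadd, csub; ceq).
    rewrite ip_add_l in H1 by (auto; apply H2_sub; auto). rewrite <- Hc in H1.
    pose proof (proj2 (Hs n)).
    rewrite (fun_ext2 (cadd (csub h u) (csub u (s n))) (csub h (s n))) in H1 by (intros; unfold cadd, csub; ceq).
    unfold t in H1. rewrite Cmod2 in H1. set (e := ip (csub u (s n)) v) in *. clearbody e. clear Hc.
    destruct c as [c1 c2]. destruct e as [e1 e2].
    simpl in *. lra. }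
  assert (Hq : fst c ^ 2 + snd c ^ 2 = 0).
  { apply NNPP; intro Hq0. set (q := fst c ^ 2 + snd c ^ 2) in *.
    assert (Hqp : 0 < q) by (pose proof (pow2_ge_0 (fst c)); pose proof (pow2_ge_0 (snd c)); unfold q in *; lra).
    pose proof (nrm2_nonneg v HvH) as Hnv.
    set (sg := / (nrm2 v + 1)). assert (Hsg : 0 < sg) by (apply Rinv_0_lt_compat; lra).
    assert (Hsgv : sg * nrm2 v <= 1). { unfold sg. apply Rmult_le_reg_l with (nrm2 v + 1); [lra|].
      field_simplify; lra. }
    set (A := Rabs (fst c) + Rabs (snd c) + 1). assert (HA : 1 <= A) by (unfold A; pose proof (Rabs_pos (fst c)); pose proof (Rabs_pos (snd c)); lra).
    set (eta := q / (8 * A)). assert (Heta : 0 < eta) by (unfold eta; apply Rdiv_lt_0_compat; lra).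
    destruct (small_ip v HvH eta Heta) as [eps [Heps Hsm]].
    destruct (Hconv eps Heps) as [K1 HK1].
    destruct (inv_small (sg * q / 4)) as [K2 HK2]. { apply Rdiv_lt_0_compat; [apply Rmult_lt_0_compat|]; lra. }
    set (n := Nat.max K1 K2).
    pose proof (Key n sg) as Kn.
    destruct (Hsm (csub u (s n))) as [B1 B2]. apply H2_sub; auto. apply HK1; unfold n; lia.
    pose proof (HK2 n ltac:(unfold n; lia)) as Hinv.
    set (e := ip (csub u (s n)) v) in *. clearbody e. destruct e as [e1 e2]. unfold Re, Im in B1, B2. simpl in *.
    assert (a1 : - (Rabs (fst c) * eta) <= fst c * e1).
    { assert (Rabs (fst c * e1) <= Rabs (fst c) * eta) by (rewrite Rabs_mult; apply Rmult_le_compat_l; auto; apply Rabs_pos).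
      apply Rabs_le_between in H. lra. }
    assert (a2 : - (Rabs (snd c) * eta) <= snd c * e2).
    { assert (Rabs (snd c * e2) <= Rabs (snd c) * eta) by (rewrite Rabs_mult; apply Rmult_le_compat_l; auto; apply Rabs_pos).
      apply Rabs_le_between in H. lra. }
    assert (a3 : (Rabs (fst c) + Rabs (snd c)) * eta <= q / 8).
    { apply Rle_trans with (A * eta). apply Rmult_le_compat_r; unfold A; lra. unfold eta. apply Req_le. field. lra. }
    assert (a4 : sg ^ 2 * q * nrm2 v <= sg * q).
    { replace (sg ^ 2 * q * nrm2 v) with ((sg * q) * (sg * nrm2 v)) by ring. rewrite <- (Rmult_1_r (sg * q)) at 2.
      apply Rmult_le_compat_l; auto. apply Rmult_le_pos; lra. }
    assert (a5 : sg * (fst c * e1 + snd c * e2) >= - (sg * (q / 8))).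
    { assert (- ((Rabs (fst c) + Rabs (snd c)) * eta) <= fst c * e1 + snd c * e2) by lra.
      assert (- (q/8) <= fst c * e1 + snd c * e2) by lra.
      apply Rle_ge. replace (- (sg * (q / 8))) with (sg * (- (q/8))) by ring. apply Rmult_le_compat_l; lra. }
    assert (0 < sg * q) by (apply Rmult_lt_0_compat; lra).
    lra. }
  destruct c as [c1 c2]. simpl in Hq. pose proof (pow2_ge_0 c1). pose proof (pow2_ge_0 c2).
  assert (c1 ^ 2 = 0) by lra. assert (c2 ^ 2 = 0) by lra.
  assert (c1 = 0) by (destruct (Req_dec c1 0); auto; exfalso; apply (pow_nonzero c1 2); auto).
  assert (c2 = 0) by (destruct (Req_dec c2 0); auto; exfalso; apply (pow_nonzero c2 2); auto).
  subst. reflexivity.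
Qed.


Program Definition pzero : poly2 := Poly2 (fun _ _ => RtoC 0) 0 _.
Program Definition mono (a b : nat) : poly2 :=
  Poly2 (fun i j => if (Nat.eqb i a && Nat.eqb j b)%bool then RtoC 1 else RtoC 0) (Nat.max a b) _.
Next Obligation. destruct (Nat.eqb_spec i a), (Nat.eqb_spec j b); simpl; auto; lia. Qed.
Program Definition padd (q1 q2 : poly2) : poly2 :=
  Poly2 (fun i j => Cplus (pcoef q1 i j) (pcoef q2 i j)) (Nat.max (pdeg q1) (pdeg q2)) _.
Next Obligation. rewrite !pcoef_supp by lia. ceq. Qed.
Program Definition pscal (c : C) (q : poly2) : poly2 :=
  Poly2 (fun i j => Cmult c (pcoef q i j)) (pdeg q) _.
Next Obligation. rewrite pcoef_supp by lia. ceq. Qed.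
Program Definition pshz (q : poly2) : poly2 :=
  Poly2 (fun i j => match i with O => RtoC 0 | S i' => pcoef q i' j end) (S (pdeg q)) _.
Next Obligation. destruct i; auto. apply pcoef_supp. lia. Qed.
Definition trunc (N : nat) (h : coefs) : coefs := fun i j => if (Nat.ltb i N && Nat.ltb j N)%bool then h i j else RtoC 0.
Program Definition ptrunc (N : nat) (h : coefs) : poly2 := Poly2 (trunc N h) N _.
Next Obligation. unfold trunc. destruct (Nat.ltb_spec i N), (Nat.ltb_spec j N); simpl; auto; lia. Qed.

Lemma mulp_ext_pt q g i j : mulp q g i j = csum (fun k => csum (fun l => Cmult (pcoef q k l) (g (i - k)%nat (j - l)%nat)) (S j)) (S i).
Proof. reflexivity. Qed.

Lemma mulp_mono a b g : mulp (mono a b) g = sh a b g.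
Proof. apply fun_ext2; intros i j. unfold mulp, sh.
  change (pcoef (mono a b)) with (fun i j => if (Nat.eqb i a && Nat.eqb j b)%bool then RtoC 1 else RtoC 0). cbv beta.
  destruct (Nat.leb_spec a i), (Nat.leb_spec b j).
  - rewrite (csum_single _ _ a); [| lia |].
    2:{ intros k Hk Hka. apply csum_zero'; intros l Hl. destruct (Nat.eqb_spec k a); [lia|]. simpl. ceq. }
    rewrite (csum_single _ _ b); [| lia |].
    2:{ intros l Hl Hlb. rewrite Nat.eqb_refl. destruct (Nat.eqb_spec l b); [lia|]. simpl. ceq. }
    rewrite !Nat.eqb_refl; simpl. ceq.
  - apply csum_zero'; intros k Hk; apply csum_zero'; intros l Hl. destruct (Nat.eqb_spec k a), (Nat.eqb_spec l b); simpl; try ceq. lia.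
  - apply csum_zero'; intros k Hk; apply csum_zero'; intros l Hl. destruct (Nat.eqb_spec k a), (Nat.eqb_spec l b); simpl; try ceq; lia.
  - apply csum_zero'; intros k Hk; apply csum_zero'; intros l Hl. destruct (Nat.eqb_spec k a), (Nat.eqb_spec l b); simpl; try ceq; lia. Qed.

Lemma mulp_zero g : mulp pzero g = czero.
Proof. apply fun_ext2; intros i j. unfold mulp, czero. apply csum_zero'; intros; apply csum_zero'; intros; ceq. Qed.

Lemma mulp_padd q1 q2 g : mulp (padd q1 q2) g = cadd (mulp q1 g) (mulp q2 g).
Proof. apply fun_ext2; intros i j. unfold mulp, cadd. rewrite <- csum_plus. apply csum_ext_lt; intros.
  rewrite <- csum_plus. apply csum_ext_lt; intros. ceq. Qed.
Lemma mulp_pscal c q g : mulp (pscal c q) g = cscal c (mulp q g).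
Proof. apply fun_ext2; intros i j. unfold mulp, cscal. rewrite <- csum_scal. apply csum_ext_lt; intros.
  rewrite <- csum_scal. apply csum_ext_lt; intros. ceq. Qed.
Lemma mulp_csub q g1 g2 : mulp q (csub g1 g2) = csub (mulp q g1) (mulp q g2).
Proof. apply fun_ext2; intros i j. unfold mulp, csub.
  replace (Cminus (csum (fun k => csum (fun l => Cmult (pcoef q k l) (g1 (i - k)%nat (j - l)%nat)) (S j)) (S i))
    (csum (fun k => csum (fun l => Cmult (pcoef q k l) (g2 (i - k)%nat (j - l)%nat)) (S j)) (S i)))
  with (Cplus (csum (fun k => csum (fun l => Cmult (pcoef q k l) (g1 (i - k)%nat (j - l)%nat)) (S j)) (S i))
    (Cmult (RtoC (-1)) (csum (fun k => csum (fun l => Cmult (pcoef q k l) (g2 (i - k)%nat (j - l)%nat)) (S j)) (S i)))) by ceq.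
  rewrite <- csum_scal, <- csum_plus. apply csum_ext_lt; intros.
  rewrite <- csum_scal, <- csum_plus. apply csum_ext_lt; intros. ceq. Qed.

Lemma mulp_pshz_0 q g j : mulp (pshz q) g 0%nat j = RtoC 0.
Proof. unfold mulp. apply csum_zero'; intros k Hk. assert (k = 0)%nat by lia. subst.
  apply csum_zero'; intros. simpl. ceq. Qed.
Lemma mulp_pshz_S q g i j : mulp (pshz q) g (S i) j = mulp q g i j.
Proof. unfold mulp. rewrite csum_first. simpl pcoef at 1. rewrite csum_zero'. 2:{ intros; ceq. }
  simpl. unfold mulp. match goal with |- Cplus _ ?X = _ => replace X with (csum (fun k => csum (fun l => Cmult (pcoef q k l) (g (i - k)%nat (j - l)%nat)) (S j)) (S i)) by reflexivity end.
  ceq. Qed.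
Lemma mulz_mulp q g : mulz (mulp q g) = mulp (pshz q) g.
Proof. apply fun_ext2; intros i j. unfold mulz at 1. destruct i.
  - rewrite mulp_pshz_0; auto. - rewrite mulp_pshz_S; auto. Qed.

Lemma csum_csum_extend (U : nat -> nat -> C) N1 N2 M : (N1 <= M)%nat -> (N2 <= M)%nat ->
  (forall k l, (N1 <= k)%nat \/ (N2 <= l)%nat -> U k l = RtoC 0) ->
  csum (fun k => csum (U k) N2) N1 = csum (fun k => csum (U k) M) M.
Proof. intros H1 H2 H. symmetry. rewrite (csum_extend _ N1 M); auto.
  - apply csum_ext_lt; intros. apply csum_extend; auto. intros; apply H; lia.
  - intros. apply csum_zero'; intros; apply H; lia. Qed.

Lemma mulp_decomp q g : mulp q g =
  fsum (S (pdeg q)) (fun a => fsum (S (pdeg q)) (fun b => cscal (pcoef q a b) (sh a b g))).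
Proof. apply fun_ext2; intros i j. unfold mulp, fsum, cscal, sh.
  set (d := pdeg q). set (M := S (Nat.max (Nat.max i j) d)).
  set (U := fun k l => if (Nat.leb k i && Nat.leb l j)%bool then Cmult (pcoef q k l) (g (i - k)%nat (j - l)%nat) else RtoC 0).
  transitivity (csum (fun k => csum (U k) (S j)) (S i)).
  { apply csum_ext_lt; intros k Hk; apply csum_ext_lt; intros l Hl. unfold U.
    destruct (Nat.leb_spec k i), (Nat.leb_spec l j); simpl; auto; lia. }
  rewrite (csum_csum_extend U _ _ M) by (unfold M; try lia; intros k l [Hk|Hl]; unfold U;
    destruct (Nat.leb_spec k i), (Nat.leb_spec l j); simpl; auto; lia).
  transitivity (csum (fun k => csum (U k) (S d)) (S d)).
  2:{ apply csum_ext_lt; intros a Ha; apply csum_ext_lt; intros b Hb. unfold U.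
    destruct (Nat.leb_spec a i), (Nat.leb_spec b j); simpl; auto; ceq. }
  symmetry. apply csum_csum_extend; unfold M; try lia. intros k l Hkl. unfold U.
  destruct (Nat.leb_spec k i), (Nat.leb_spec l j); simpl; auto. rewrite pcoef_supp by (unfold d in Hkl; lia). ceq. Qed.

Lemma mulp_comm q r : mulp q (pcoef r) = mulp r (pcoef q).
Proof. apply fun_ext2; intros i j. unfold mulp. rewrite csum_rev. apply csum_ext_lt; intros k Hk.
  rewrite csum_rev. apply csum_ext_lt; intros l Hl.
  replace (i - (S i - 1 - k))%nat with k by lia. replace (j - (S j - 1 - l))%nat with l by lia.
  replace (S i - 1 - k)%nat with (i - k)%nat by lia. replace (S j - 1 - l)%nat with (j - l)%nat by lia. ceq. Qed.

Lemma H2_mulp q g : in_H2 g -> in_H2 (mulp q g).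
Proof. intros Hg. rewrite mulp_decomp. apply H2_fsum; intros. apply H2_fsum; intros. apply H2_scal, H2_sh; auto. Qed.

Lemma mulp_bound q : exists Cq, 0 <= Cq /\ forall g N, psum2 (mulp q g) N <= Cq * psum2 g N.
Proof. set (K := S (pdeg q)).
  exists (INR K * rsum (fun a => INR K * rsum (fun b => Cmod (pcoef q a b) ^ 2) K) K). split.
  { apply Rmult_le_pos. apply pos_INR. apply rsum_nonneg; intros. apply Rmult_le_pos. apply pos_INR.
    apply rsum_nonneg; intros; apply Cmod2_nonneg. }
  intros g N. rewrite mulp_decomp. fold K. eapply Rle_trans. apply psum2_fsum_le.
  rewrite Rmult_assoc. apply Rmult_le_compat_l. apply pos_INR. rewrite Rmult_comm, <- rsum_scal.
  apply rsum_le; intros a _. eapply Rle_trans. apply psum2_fsum_le.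
  replace (psum2 g N * (INR K * rsum (fun b => Cmod (pcoef q a b) ^ 2) K))
    with (INR K * rsum (fun b => Cmod (pcoef q a b) ^ 2 * psum2 g N) K).
  2:{ rewrite (rsum_ext_lt _ (fun b => psum2 g N * Cmod (pcoef q a b) ^ 2)) by (intros; ring). rewrite rsum_scal. ring. }
  apply Rmult_le_compat_l. apply pos_INR. apply rsum_le; intros b _. rewrite psum2_scal.
  apply Rmult_le_compat_l. apply Cmod2_nonneg. apply psum2_sh_le. Qed.

Lemma psum2_trunc_err h N M : in_H2 h -> psum2 (csub h (trunc N h)) M <= nrm2 h - psum2 h N.
Proof. intros Hh. pose proof (psum2_le_nrm2 h N Hh). destruct (Nat.le_gt_cases N M).
  - assert (E : psum2 (csub h (trunc N h)) M + psum2 (trunc N h) M = psum2 h M).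
    { rewrite !psum2_eq, <- rsum2_plus. apply rsum2_ext; intros. unfold csub, trunc.
      destruct (Nat.ltb i N && Nat.ltb j N)%bool; rewrite !Cmod2; destruct (h i j); simpl; ring. }
    assert (E2 : psum2 (trunc N h) M = psum2 h N).
    { rewrite !psum2_eq. unfold rsum2. rewrite (rsum_extend _ N M); auto.
      - apply rsum_ext_lt; intros i Hi. rewrite (rsum_extend _ N M); auto.
        + apply rsum_ext_lt; intros k Hk. unfold trunc. destruct (Nat.ltb_spec i N), (Nat.ltb_spec k N); simpl; auto; lia.
        + intros k Hk. unfold trunc. destruct (Nat.ltb_spec i N), (Nat.ltb_spec k N); simpl; try lia. apply Cmod0sq.
      - intros k Hk. apply rsum_zero'; intros l Hl. unfold trunc. destruct (Nat.ltb_spec k N); simpl; try lia. apply Cmod0sq. }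
    pose proof (psum2_le_nrm2 h M Hh). lra.
  - assert (psum2 (csub h (trunc N h)) M = 0).
    { rewrite psum2_eq. unfold rsum2. apply rsum_zero'; intros. apply rsum_zero'; intros. unfold csub, trunc.
      rewrite Cmod2. destruct (Nat.ltb_spec k N), (Nat.ltb_spec k0 N); simpl; try lia. destruct (h k k0); simpl; ring. }
    lra. Qed.

Lemma trunc_conv h : in_H2 h -> forall eps, 0 < eps -> exists N, nrm2 (csub h (trunc N h)) <= eps.
Proof. intros Hh eps He. pose proof (nrm2_lim h Hh) as L. apply is_lim_seq_spec in L.
  destruct (L (mkposreal eps He)) as [N HN]. exists N. apply nrm2_le. intros M.
  eapply Rle_trans. apply psum2_trunc_err; auto. pose proof (HN N (le_n N)). simpl in H.
  pose proof (psum2_le_nrm2 h N Hh). apply Rabs_lt_between in H. lra. Qed.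


Lemma pcombo_fsum m qs gs : pcombo m qs gs = fsum m (fun k => mulp (qs k) (gs k)).
Proof. reflexivity. Qed.
Lemma pcombo_H2 m qs gs : (forall k, (k < m)%nat -> in_H2 (gs k)) -> in_H2 (pcombo m qs gs).
Proof. intros H. rewrite pcombo_fsum. apply H2_fsum; intros. apply H2_mulp; auto. Qed.
Lemma gen_H2 m gs f : in_gen m gs f -> in_H2 f.
Proof. intros [H _]; auto. Qed.
Lemma csub_self_psum2 f N : psum2 (csub f f) N = 0.
Proof. rewrite (psum2_ext _ czero). apply psum2_zero. intros; unfold csub, czero; ceq. Qed.
Lemma gen_self m gs qs : (forall k, (k < m)%nat -> in_H2 (gs k)) -> in_gen m gs (pcombo m qs gs).
Proof. intros H. split. apply pcombo_H2; auto. intros eps He. exists qs. intros N. rewrite csub_self_psum2. lra. Qed.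

Lemma pcombo_lin m qs1 qs2 c gs : pcombo m (fun k => padd (qs1 k) (pscal c (qs2 k))) gs =
  cadd (pcombo m qs1 gs) (cscal c (pcombo m qs2 gs)).
Proof. apply fun_ext2; intros i j. unfold pcombo, cadd, cscal. rewrite <- csum_scal, <- csum_plus.
  apply csum_ext_lt; intros. rewrite mulp_padd, mulp_pscal. reflexivity. Qed.

Lemma gen_lin m gs f g c : in_gen m gs f -> in_gen m gs g -> in_gen m gs (cadd f (cscal c g)).
Proof. intros [Hf Af] [Hg Ag]. split. apply H2_add; auto; apply H2_scal; auto.
  intros eps He. pose proof (Cmod2_nonneg c).
  destruct (Af (eps / 4)) as [qs1 H1]. lra.
  destruct (Ag (eps / (4 * (Cmod c ^ 2 + 1)))) as [qs2 H2]. apply Rdiv_lt_0_compat; lra.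
  exists (fun k => padd (qs1 k) (pscal c (qs2 k))). intros N. rewrite pcombo_lin.
  rewrite (psum2_ext _ (cadd (csub f (pcombo m qs1 gs)) (cscal c (csub g (pcombo m qs2 gs))))).
  2:{ intros; unfold cadd, csub, cscal; ceq. }
  eapply Rle_trans. apply psum2_add_le. rewrite psum2_scal.
  pose proof (H1 N). pose proof (H2 N).
  assert (Cmod c ^ 2 * psum2 (csub g (pcombo m qs2 gs)) N <= eps / 4).
  { apply Rle_trans with (Cmod c ^ 2 * (eps / (4 * (Cmod c ^ 2 + 1)))). apply Rmult_le_compat_l; auto.
    apply Rmult_le_reg_r with (4 * (Cmod c ^ 2 + 1)). lra. field_simplify; nra. }
  lra. Qed.

Lemma gen_zero m gs : in_gen m gs czero.
Proof. split. apply H2_zero. intros eps He. exists (fun _ => pzero). intros N.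
  rewrite (psum2_ext _ czero). rewrite psum2_zero; lra. intros; unfold csub, pcombo.
  rewrite csum_zero'. unfold czero; ceq. intros k _. rewrite mulp_zero. reflexivity. Qed.

Lemma gen_closed m gs f : in_H2 f -> (forall eps, 0 < eps -> exists v, in_gen m gs v /\ nrm2 (csub f v) <= eps) -> in_gen m gs f.
Proof. intros Hf H. split; auto. intros eps He. destruct (H (eps / 4)) as [v [[Hv Av] Hn]]. lra.
  destruct (Av (eps / 4)) as [qs Hq]. lra. exists qs. intros N.
  rewrite (psum2_ext _ (cadd (csub f v) (csub v (pcombo m qs gs)))) by (intros; unfold cadd, csub; ceq).
  eapply Rle_trans. apply psum2_add_le. pose proof (psum2_le_nrm2 (csub f v) N (H2_sub _ _ Hf Hv)).
  pose proof (Hq N). lra. Qed.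

Lemma gen_single m gs q k0 : (forall k, (k < m)%nat -> in_H2 (gs k)) -> (k0 < m)%nat -> in_gen m gs (mulp q (gs k0)).
Proof. intros H Hk. replace (mulp q (gs k0)) with (pcombo m (fun k => if Nat.eqb k k0 then q else pzero) gs).
  apply gen_self; auto. apply fun_ext2; intros i j. unfold pcombo. rewrite (csum_single _ _ k0); auto.
  - rewrite Nat.eqb_refl. auto.
  - intros k Hk1 Hk2. destruct (Nat.eqb_spec k k0); [lia|]. rewrite mulp_zero. reflexivity. Qed.

Lemma pcombo1 qs gs : pcombo 1 qs gs = mulp (qs 0%nat) (gs 0%nat).
Proof. apply fun_ext2; intros i j. unfold pcombo. simpl csum. ceq. Qed.
Lemma mulz_csub a b : mulz (csub a b) = csub (mulz a) (mulz b).
Proof. apply fun_ext2; intros i j. unfold mulz, csub. destruct i; auto. ceq. Qed.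
Lemma psum2_mulz_le f N : psum2 (mulz f) N <= psum2 f N.
Proof. rewrite mulz_sh. apply psum2_sh_le. Qed.

Lemma orth_clim f g : orth f g <-> clim (pinner f g) (RtoC 0).
Proof. reflexivity. Qed.
Lemma clim_val u a b : clim u a -> a = b -> clim u b.
Proof. intros H ->; auto. Qed.
Lemma orth_lin_l x x' y c : orth x y -> orth x' y -> orth (cadd x (cscal c x')) y.
Proof. rewrite !orth_clim. intros H1 H2. eapply clim_val.
  - eapply clim_ext; [|apply clim_plus; [exact H1|apply (clim_scal c); exact H2]].
    intros N. rewrite !pinner_eq, <- csum2_scal, <- csum2_plus. apply csum2_ext; intros. unfold cadd, cscal. ceq.
  - ceq. Qed.
Lemma orth_lin_r y x x' c : orth y x -> orth y x' -> orth y (cadd x (cscal c x')).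
Proof. rewrite !orth_clim. intros H1 H2. eapply clim_val.
  - eapply clim_ext; [|apply clim_plus; [exact H1|apply (clim_scal (Cconj c)); exact H2]].
    intros N. rewrite !pinner_eq, <- csum2_scal, <- csum2_plus. apply csum2_ext; intros. unfold cadd, cscal. ceq.
  - ceq. Qed.


Lemma Cmult_reg a b : a <> RtoC 0 -> Cmult a b = RtoC 0 -> b = RtoC 0.
Proof. intros Ha H. replace b with (Cmult (Cinv a) (Cmult a b)). rewrite H. ceq.
  rewrite Cmult_assoc, Cinv_l; auto. ceq. Qed.

Lemma span_ind (L : nat) : forall (Sp : coefs -> Prop) (phi : nat -> coefs -> C),
  (forall x y c, Sp x -> Sp y -> Sp (cadd x (cscal c y))) ->
  (forall l x y c, Sp x -> Sp y -> phi l (cadd x (cscal c y)) = Cplus (phi l x) (Cmult c (phi l y))) ->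
  (forall x, Sp x -> (forall l, (l < L)%nat -> phi l x = RtoC 0) -> x = czero) ->
  exists d vs, (forall k, (k < d)%nat -> Sp (vs k)) /\ forall x, Sp x -> exists cs, x = lincomb d cs vs.
Proof. induction L; intros Sp phi HS Hphi Hker.
  - exists 0%nat, (fun _ => czero). split. intros; lia. intros x Hx. exists (fun _ => RtoC 0).
    rewrite (Hker x Hx) by (intros; lia). reflexivity.
  - destruct (classic (exists s0, Sp s0 /\ phi L s0 <> RtoC 0)) as [[s0 [Hs0 Hp0]]|Hno].
    + set (Sp' := fun x => Sp x /\ phi L x = RtoC 0).
      destruct (IHL Sp' phi) as [d [vs [Hvs Hspan]]].
      * intros x y c [Hx1 Hx2] [Hy1 Hy2]. split; auto. rewrite Hphi, Hx2, Hy2 by auto. ceq.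
      * intros l x y c [Hx _] [Hy _]. auto.
      * intros x [Hx1 Hx2] Hl. apply Hker; auto. intros l Hl'. destruct (Nat.eq_dec l L); [subst; auto|]. apply Hl; lia.
      * exists (S d), (fun k => if Nat.ltb k d then vs k else s0). split.
        { intros k Hk. destruct (Nat.ltb_spec k d). apply Hvs; auto. auto. }
        intros x Hx. set (a := Cdiv (phi L x) (phi L s0)).
        set (x' := cadd x (cscal (Copp a) s0)).
        assert (Hx' : Sp' x').
        { split. apply HS; auto. unfold x'. rewrite Hphi by auto. unfold a. field. auto. }
        destruct (Hspan x' Hx') as [cs Hcs]. exists (fun k => if Nat.ltb k d then cs k else a).
        apply fun_ext2; intros i j. unfold lincomb. rewrite csum_S. rewrite Nat.ltb_irrefl.
        rewrite (csum_ext_lt _ (fun k => Cmult (cs k) (vs k i j))).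
        2:{ intros k Hk. destruct (Nat.ltb_spec k d); [auto|lia]. }
        assert (E : x' i j = lincomb d cs vs i j) by (rewrite Hcs; auto). unfold lincomb in E. rewrite <- E.
        unfold x', cadd, cscal. ring.
    + apply (IHL Sp phi); auto. intros x Hx Hl. apply Hker; auto. intros l Hl'. destruct (Nat.eq_dec l L).
      * subst. apply NNPP. intros C. apply Hno. exists x; auto.
      * apply Hl; lia. Qed.


Lemma H2_p (p : poly2) : in_H2 (pcoef p).
Proof. apply (H2_fin _ (pdeg p)). apply pcoef_supp. Qed.
Lemma gP_H2 (p : poly2) : forall k, (k < 1)%nat -> in_H2 ((fun _ : nat => pcoef p) k).
Proof. intros; apply (H2_p p). Qed.

Lemma P_sh (p : poly2) a b : in_gen 1 (fun _ : nat => pcoef p) (sh a b (pcoef p)).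
Proof. rewrite <- mulp_mono. apply (gen_single 1 (fun _ : nat => pcoef p) (mono a b) 0%nat (gP_H2 p)). lia. Qed.

Lemma P_mulz (p : poly2) u : in_gen 1 (fun _ : nat => pcoef p) u -> in_gen 1 (fun _ : nat => pcoef p) (mulz u).
Proof. intros [Hu Au]. apply gen_closed. apply H2_mulz; auto. intros eps He.
  destruct (Au eps He) as [qs Hq]. exists (mulz (pcombo 1 qs (fun _ : nat => pcoef p))). split.
  - rewrite pcombo1, mulz_mulp. apply (gen_single 1 (fun _ : nat => pcoef p) _ 0%nat (gP_H2 p)). lia.
  - apply nrm2_le. intros N. rewrite <- mulz_csub. eapply Rle_trans. apply psum2_mulz_le. auto. Qed.

Lemma P_mulp (p : poly2) h : in_H2 h -> in_gen 1 (fun _ : nat => pcoef p) (mulp p h).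
Proof. intros Hh. apply gen_closed. apply H2_mulp; auto. intros eps He.
  destruct (mulp_bound p) as [Cq [HC HCq]].
  destruct (trunc_conv h Hh (eps / (Cq + 1))) as [N HN]. apply Rdiv_lt_0_compat; lra.
  exists (mulp p (trunc N h)). split.
  - change (trunc N h) with (pcoef (ptrunc N h)). rewrite mulp_comm. apply (gen_single 1 (fun _ : nat => pcoef p) _ 0%nat (gP_H2 p)). lia.
  - rewrite <- mulp_csub. apply nrm2_le. intros M. eapply Rle_trans. apply HCq.
    pose proof (psum2_le_nrm2 (csub h (trunc N h)) M). assert (in_H2 (csub h (trunc N h))).
    { apply H2_sub; auto. apply (H2_fin _ N). intros i j Hij. unfold trunc.
      destruct (Nat.ltb_spec i N), (Nat.ltb_spec j N); simpl; auto; lia. }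
    specialize (H H0).
    apply Rle_trans with (Cq * (eps / (Cq + 1))). apply Rmult_le_compat_l; lra.
    apply Rmult_le_reg_r with (Cq + 1). lra. field_simplify; nra. Qed.

Lemma P_in_M (p : poly2) m (gs : nat -> coefs) : gs 0%nat = pcoef p -> forall y, in_gen 1 (fun _ : nat => pcoef p) y -> in_gen (S m) gs y.
Proof. intros Hg y [Hy Ay]. split; auto. intros eps He. destruct (Ay eps He) as [qs Hq].
  exists (fun k => match k with O => qs 0%nat | _ => pzero end). intros N.
  rewrite (psum2_ext _ (csub y (pcombo 1 qs (fun _ : nat => pcoef p)))); auto. intros i j. unfold csub. f_equal.
  unfold pcombo. rewrite (csum_extend _ 1 (S m)); try lia.
  - simpl. rewrite Hg. reflexivity.
  - intros k Hk. destruct k; [lia|]. rewrite mulp_zero. reflexivity. Qed.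

Lemma proj_P (p : poly2) h : in_H2 h -> exists u, in_gen 1 (fun _ : nat => pcoef p) u /\ forall v, in_gen 1 (fun _ : nat => pcoef p) v -> ip (csub h u) v = RtoC 0.
Proof. apply projection.
  - apply gen_H2. - apply gen_zero. - intros; apply gen_lin; auto. - intros; apply gen_closed; auto. Qed.


Lemma ip_fsum K F x : (forall k, (k < K)%nat -> in_H2 (F k)) -> in_H2 x ->
  ip (fsum K F) x = csum (fun k => ip (F k) x) K.
Proof. intros HF Hx. induction K.
  - change (fsum 0 F) with czero. apply ip_zero_l; auto.
  - rewrite (fun_ext2 (fsum (S K) F) (cadd (fsum K F) (F K))) by (intros; reflexivity).
    rewrite ip_add_l; [| apply H2_fsum; intros; apply HF; lia | apply HF; lia | auto].
    rewrite IHK; [reflexivity|]. intros; apply HF; lia. Qed.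

Lemma ip_fsum_scal K c F x : (forall k, (k < K)%nat -> in_H2 (F k)) -> in_H2 x ->
  ip (fsum K (fun k => cscal (c k) (F k))) x = csum (fun k => Cmult (c k) (ip (F k) x)) K.
Proof. intros HF Hx. rewrite ip_fsum; auto. apply csum_ext_lt; intros. apply ip_scal_l; auto.
  intros; apply H2_scal; auto. Qed.

Lemma last_nonzero (c : nat -> C) P : (exists b, (b <= P)%nat /\ c b <> RtoC 0) ->
  exists D, (D <= P)%nat /\ c D <> RtoC 0 /\ forall b, (D < b <= P)%nat -> c b = RtoC 0.
Proof. induction P; intros [b [Hb Hcb]].
  - exists 0%nat. assert (b = 0)%nat by lia. subst. split; auto. split; auto. intros; lia.
  - destruct (classic (c (S P) = RtoC 0)) as [E|E].
    + destruct IHP as [D [HD1 [HD2 HD3]]]. { exists b. split; auto. destruct (Nat.eq_dec b (S P)); [subst; contradiction|lia]. }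
      exists D. split; [lia|]. split; auto. intros b' Hb'. destruct (Nat.eq_dec b' (S P)); [subst; auto|]. apply HD3; lia.
    + exists (S P). split; auto. split; auto. intros; lia. Qed.

Theorem lemma4p1 (p : poly2) (n : nat) (fs : nat -> coefs)
  (hfs : forall k, (k < n)%nat -> in_H2 (fs k))
  (hp : forall a b : C, peval p a b = RtoC 0 -> a = RtoC 0 -> in_bdry_bidisc a b -> False) :
  let gens : nat -> coefs := fun k => match k with O => pcoef p | S k' => fs k' end in
  let inM : coefs -> Prop := in_gen (S n) gens in
  let inP : coefs -> Prop := in_gen 1 (fun _ => pcoef p) in
  let inQ : coefs -> Prop := fun x => inM x /\ (forall y, inP y -> orth x y) in
  (* ker T_{z,Q}^* = { x in Q | <P_Q M_z y, x> = <M_z y, x> = 0 for all y in Q } *)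
  let inKer : coefs -> Prop := fun x => inQ x /\ (forall y, inQ y -> orth (mulz y) x) in
  exists (d : nat) (vs : nat -> coefs),
    (forall k, (k < d)%nat -> inKer (vs k)) /\
    (forall x, inKer x -> exists cs : nat -> C, x = lincomb d cs vs).
Proof.
  intros gens inM inP inQ inKer.
  assert (HgH : forall k, (k < S n)%nat -> in_H2 (gens k)).
  { intros [|k] Hk. apply H2_p. apply hfs; lia. }
  set (dp := pdeg p).
  (* a nonzero coefficient of p(0, w) *)
  assert (Hc : exists b, (b <= dp)%nat /\ pcoef p 0%nat b <> RtoC 0).
  { apply NNPP. intros Hn. apply (hp (RtoC 0) (RtoC 1)); auto.
    - unfold peval. apply csum_zero'; intros i Hi. apply csum_zero'; intros j Hj. destruct i.
      + assert (pcoef p 0%nat j = RtoC 0). { apply NNPP; intros C. apply Hn. exists j. split; auto. unfold dp; lia. }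
        rewrite H. ceq.
      + simpl cpow. ceq.
    - unfold in_bdry_bidisc. rewrite Cmod_0, Cmod_1. lra. }
  destruct (last_nonzero (fun b => pcoef p 0%nat b) dp Hc) as [D [HD1 [HD2 HD3]]].
  assert (HD4 : forall b, (D < b)%nat -> pcoef p 0%nat b = RtoC 0).
  { intros b Hb. destruct (Nat.le_gt_cases b dp). apply HD3; lia. apply pcoef_supp. unfold dp in *; lia. }
  assert (Hinj : forall x, inKer x -> (forall k j, (k < n)%nat -> (j < S dp)%nat -> ip x (sh 0 j (fs k)) = RtoC 0) -> x = czero).
  { intros x [[HxM Hxp] HxQ] Hx0.
    assert (HxH : in_H2 x) by (apply (gen_H2 _ _ _ HxM)).
    assert (Hpa : forall y, inP y -> ip y x = RtoC 0).
    { intros y Hy. assert (HyH : in_H2 y) by apply (gen_H2 _ _ _ Hy).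
      rewrite ip_conj; auto. rewrite (proj1 (orth_ip x y HxH HyH) (Hxp y Hy)). ceq. }
    assert (HzM : forall y, inM y -> ip (mulz y) x = RtoC 0).
    { intros y Hy. assert (HyH : in_H2 y) by apply (gen_H2 _ _ _ Hy).
      destruct (proj_P p y HyH) as [u [Hu Hperp]].
      assert (HuH : in_H2 u) by apply (gen_H2 _ _ _ Hu).
      assert (HuM : inM u) by (apply (P_in_M p n gens eq_refl u Hu)).
      assert (HyuQ : inQ (csub y u)).
      { split.
        - replace (csub y u) with (cadd y (cscal (RtoC (-1)) u)) by (apply fun_ext2; intros; unfold cadd, csub, cscal; ceq).
          apply gen_lin; auto.
        - intros v Hv. apply orth_ip. apply H2_sub; auto. apply (gen_H2 _ _ _ Hv). apply Hperp; auto. }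
      pose proof (HxQ _ HyuQ) as H1. apply orth_ip in H1; [|apply H2_mulz, H2_sub; auto|auto].
      pose proof (Hpa _ (P_mulz p u Hu)) as H2.
      rewrite (fun_ext2 (mulz y) (cadd (mulz (csub y u)) (mulz u))).
      2:{ intros i j; unfold mulz, cadd, csub; destruct i; ceq. }
      rewrite ip_add_l, H1, H2; auto; [ceq|apply H2_mulz, H2_sub; auto|apply H2_mulz; auto]. }
    assert (HshM : forall k a b, (k < S n)%nat -> inM (sh a b (gens k))).
    { intros k a b Hk. rewrite <- mulp_mono. apply gen_single; auto. }
    assert (Hsh_pos : forall k a b, (k < S n)%nat -> (1 <= a)%nat -> ip (sh a b (gens k)) x = RtoC 0).
    { intros k a b Hk Ha. replace (sh a b (gens k)) with (mulz (sh (a - 1) b (gens k))).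
      apply HzM; auto. rewrite mulz_sh, sh_sh. f_equal; lia. }
    assert (Hal : forall k, (k < n)%nat -> forall j, ip (sh 0 j (fs k)) x = RtoC 0).
    { intros k Hk. assert (Hf : in_H2 (fs k)) by auto.
      set (al := fun j => ip (sh 0 j (fs k)) x).
      assert (Rec : forall m, csum (fun b => Cmult (pcoef p 0%nat b) (al (b + m)%nat)) (S dp) = RtoC 0).
      { intros m. pose proof (Hpa _ (P_mulp p _ (H2_sh 0 m _ Hf))) as HY.
        rewrite mulp_decomp in HY. rewrite ip_fsum in HY; auto.
        2:{ intros; apply H2_fsum; intros; apply H2_scal, H2_sh, H2_sh; auto. }
        rewrite csum_first in HY. rewrite ip_fsum_scal in HY by (auto; intros; apply H2_sh, H2_sh; auto).
        rewrite csum_zero' with (u := fun k0 => ip (fsum (S (pdeg p)) (fun b => cscal (pcoef p (S k0) b) (sh (S k0) b (sh 0 m (fs k))))) x) in HY.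
        2:{ intros a Ha. rewrite ip_fsum_scal by (auto; intros; apply H2_sh, H2_sh; auto).
            apply csum_zero'; intros b Hb. rewrite sh_sh.
            change (fs k) with (gens (S k)). rewrite Hsh_pos by lia. ceq. }
        rewrite <- HY. fold dp. unfold al. transitivity (Cplus (csum (fun b => Cmult (pcoef p 0%nat b) (ip (sh 0 b (sh 0 m (fs k))) x)) (S dp)) (RtoC 0)).
        + rewrite (csum_ext_lt _ (fun b => Cmult (pcoef p 0%nat b) (ip (sh 0 b (sh 0 m (fs k))) x))). ceq.
          intros b Hb. rewrite sh_sh. reflexivity.
        + reflexivity. }
      assert (Hall : forall N j, (j < N)%nat -> al j = RtoC 0).
      { induction N; intros j Hj; [lia|]. destruct (Nat.eq_dec j N); [|apply IHN; lia]. subst j.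
        destruct (Nat.lt_ge_cases N (S dp)).
        - unfold al. rewrite ip_conj; auto. rewrite Hx0; auto. ceq. apply H2_sh; auto.
        - pose proof (Rec (N - D)%nat) as R. rewrite (csum_single _ _ D) in R.
          + replace (D + (N - D))%nat with N in R by lia. apply Cmult_reg in R; auto.
          + lia.
          + intros b Hb HbD. destruct (Nat.lt_ge_cases b D).
            * rewrite IHN by lia. ceq.
            * rewrite HD4 by lia. ceq. }
      intros j. apply (Hall (S j)). lia. }
    assert (Hgall : forall k a b, (k < S n)%nat -> ip (sh a b (gens k)) x = RtoC 0).
    { intros [|k] a b Hk.
      - apply Hpa. apply P_sh.
      - destruct a. + apply Hal. lia. + apply Hsh_pos; lia. }
    assert (Hcombo : forall qs, ip (pcombo (S n) qs gens) x = RtoC 0).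
    { intros qs. rewrite pcombo_fsum, ip_fsum; auto. 2:{ intros; apply H2_mulp; auto. }
      apply csum_zero'; intros k Hk. rewrite mulp_decomp, ip_fsum; auto.
      2:{ intros; apply H2_fsum; intros; apply H2_scal, H2_sh; auto. }
      apply csum_zero'; intros a Ha. rewrite ip_fsum_scal; auto. 2:{ intros; apply H2_sh; auto. }
      apply csum_zero'; intros b Hb. rewrite Hgall; auto. ceq. }
    assert (Hxx : ip x x = RtoC 0).
    { apply ip_approx; auto. intros eps He. destruct HxM as [_ A]. destruct (A eps He) as [qs Hq].
      exists (pcombo (S n) qs gens). split. apply pcombo_H2; auto. split. apply Hcombo. apply nrm2_le; auto. }
    rewrite ip_self in Hxx; auto. assert (nrm2 x = 0) by (injection Hxx; auto).
    apply fun_ext2. apply nrm2_zero_eq; auto. }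
  set (SD := S dp).
  set (w := fun l => if Nat.ltb (l / SD)%nat n then sh 0 (l mod SD)%nat (fs (l / SD)%nat) else czero).
  assert (HwH : forall l, in_H2 (w l)).
  { intros l. unfold w. destruct (Nat.ltb_spec (l / SD)%nat n). apply H2_sh; auto. apply H2_zero. }
  apply (span_ind (n * SD) inKer (fun l x => ip x (w l))).
  - intros x y c [[HxM Hxp] HxQ] [[HyM Hyp] HyQ]. split; [split|].
    + apply gen_lin; auto.
    + intros v Hv. apply orth_lin_l; auto.
    + intros v Hv. apply orth_lin_r; auto.
  - intros l x y c [[HxM _] _] [[HyM _] _]. assert (in_H2 x) by apply (gen_H2 _ _ _ HxM).
    assert (in_H2 y) by apply (gen_H2 _ _ _ HyM).
    rewrite ip_add_l, ip_scal_l; auto. apply H2_scal; auto.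
  - intros x Hx Hl. apply Hinj; auto. intros k j Hk Hj.
    assert (Hlt : (k * SD + j < n * SD)%nat) by (unfold SD in *; nia).
    specialize (Hl _ Hlt). unfold w in Hl.
    assert (E1 : ((k * SD + j) / SD)%nat = k) by (symmetry; apply (Nat.div_unique _ _ _ j); unfold SD in *; lia).
    assert (E2 : ((k * SD + j) mod SD)%nat = j) by (symmetry; apply (Nat.mod_unique _ _ k); unfold SD in *; lia).
    rewrite E1, E2 in Hl. destruct (Nat.ltb_spec k n); [auto|lia].
Qed.
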